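(* Let $E=[t]_\times R$ where $t\in\mathbb R^3$ and $R\in\mathrm{SO}(3)$ is a rotation about a vector $u$ (i.e. $R$ is given by a unit quaternion $[\sigma\ u^\top]$), and suppose $u^\top t=0$. Let $\tau'=\operatorname{tr}R+1$ and $A=E-E^\top$, with entries $E_{ij}$, $A_{ij}$. Then for every triple $(i,j,k)$ of pairwise distinct indices in $\{1,2,3\}$, $$\big(A_{ki}E_{ii}E_{jk}+A_{ij}E_{kk}E_{ii}-A_{jk}(E_{kk}E_{ik}-E_{ki}E_{jj}+E_{kj}E_{ji}+E_{ij}E_{jk})\big)\tau'+2A_{ij}A_{jk}^2=0,$$ and moreover $$\big(A_{12}A_{23}E_{31}+A_{12}A_{31}E_{32}+A_{12}E_{12}E_{33}+A_{23}A_{31}E_{21}+A_{23}E_{11}E_{23}+A_{31}E_{22}E_{31}\big)\tau'+2A_{12}A_{23}A_{31}=0.$$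
   Context: $[t]_\times$ is the skew-symmetric matrix with $[t]_\times b=t\times b$. A unit quaternion $[\sigma\ u^\top]$ ($\sigma^2+\|u\|^2=1$) determines the rotation $R=2(uu^\top-\sigma[u]_\times)+(\sigma^2-\|u\|^2)I$, whose rotation axis is along $u$ (when $u\neq0$) and $\operatorname{tr}R=4\sigma^2-1$. *)

(* Defs.v *)
From HB Require Import structures.
From mathcomp Require Import all_boot all_order all_algebra.
Set Implicit Arguments. Unset Strict Implicit. Unset Printing Implicit Defensive.
Import Order.TTheory GRing.Theory Num.Theory.
Local Open Scope ring_scope.

(* the three indices 1,2,3 of the paper, as 0,1,2 *)
Definition i0 : 'I_3 := @Ordinal 3 0 isT.
Definition i1 : 'I_3 := @Ordinal 3 1 isT.
Definition i2 : 'I_3 := @Ordinal 3 2 isT.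

(* [t]_x : the skew-symmetric matrix with [t]_x b = t x b (indices 0,1,2). *)
Definition crossmx {R : comNzRingType} (t : 'cV[R]_3) : 'M[R]_3 :=
  \matrix_(i < 3, j < 3)
    (if (val i == 0%N) && (val j == 1%N) then - t i2 0
     else if (val i == 0%N) && (val j == 2%N) then t i1 0
     else if (val i == 1%N) && (val j == 0%N) then t i2 0
     else if (val i == 1%N) && (val j == 2%N) then - t i0 0
     else if (val i == 2%N) && (val j == 0%N) then - t i1 0
     else if (val i == 2%N) && (val j == 1%N) then t i0 0
     else 0).

Definition dotv {R : comNzRingType} (a b : 'cV[R]_3) : R := (a^T *m b) 0 0.

(* rotation matrix of the quaternion [sigma u^T]:
   R = 2 (u u^T - sigma [u]_x) + (sigma^2 - |u|^2) I *)
Definition quat_rot {R : comNzRingType} (sigma : R) (u : 'cV[R]_3) : 'M[R]_3 :=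
  2%:R *: (u *m u^T - sigma *: crossmx u) + (sigma ^+ 2 - dotv u u)%:M.

(* Main.v *)
Require Import Defs.
From HB Require Import structures.
From mathcomp Require Import all_boot all_order all_algebra.
Import Order.TTheory GRing.Theory Num.Theory.
Local Open Scope ring_scope.

From mathcomp Require Import ring.

Lemma sum3 (R : nmodType) (F : 'I_3 -> R) : \sum_k F k = F i0 + F i1 + F i2.
Proof.
rewrite !big_ord_recr big_ord0 /= add0r.
by congr (F _ + F _ + F _); apply/val_inj.
Qed.

Lemma qrE (R : comNzRingType) (s : R) u k j :
  quat_rot s u k j = 2%:R * (u k 0 * u j 0 - s * crossmx u k j) + (s ^+ 2 - dotv u u) * (k == j)%:R.
Proof. by rewrite /quat_rot !mxE big_ord1 !mxE mulr_natr. Qed.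

Lemma dotE (R : comNzRingType) (a b : 'cV[R]_3) : dotv a b = a i0 0 * b i0 0 + a i1 0 * b i1 0 + a i2 0 * b i2 0.
Proof. by rewrite /dotv mxE sum3 !mxE. Qed.

Lemma EE (R : comNzRingType) (M N : 'M[R]_3) i j : (M *m N) i j = \sum_k M i k * N k j.
Proof. by rewrite mxE. Qed.

Lemma AE (R : comNzRingType) (M : 'M[R]_3) i j : (M - M^T) i j = M i j - M j i.
Proof. by rewrite !mxE. Qed.

Lemma trE (R : comNzRingType) (M : 'M[R]_3) : mxtrace M = M i0 i0 + M i1 i1 + M i2 i2.
Proof. by rewrite /mxtrace sum3. Qed.

Lemma ord3 (i : 'I_3) : i = i0 \/ i = i1 \/ i = i2.
Proof.
case: i => [[|[|[|m]]] Hi]; [left|right;left|right;right|by []]; exact: val_inj.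
Qed.

Lemma ent00 (R : comNzRingType) (s : R) (u t : 'cV[R]_3) :
  (crossmx t *m quat_rot s u) i0 i0 = (2%:R*(u i0 0)*(u i2 0)*(t i1 0) - 2%:R*(u i0 0)*(u i1 0)*(t i2 0) + 2%:R*s*(u i2 0)*(t i2 0) + 2%:R*s*(u i1 0)*(t i1 0)).
Proof. rewrite EE sum3 !qrE !dotE !mxE /=; ring. Qed.

Lemma ent01 (R : comNzRingType) (s : R) (u t : 'cV[R]_3) :
  (crossmx t *m quat_rot s u) i0 i1 = (1%:R*(u i2 0)^+2*(t i2 0) + 2%:R*(u i1 0)*(u i2 0)*(t i1 0) - 1%:R*(u i1 0)^+2*(t i2 0) + 1%:R*(u i0 0)^+2*(t i2 0) - 2%:R*s*(u i0 0)*(t i1 0) - 1%:R*s^+2*(t i2 0)).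
Proof. rewrite EE sum3 !qrE !dotE !mxE /=; ring. Qed.

Lemma ent02 (R : comNzRingType) (s : R) (u t : 'cV[R]_3) :
  (crossmx t *m quat_rot s u) i0 i2 = (1%:R*(u i2 0)^+2*(t i1 0) - 2%:R*(u i1 0)*(u i2 0)*(t i2 0) - 1%:R*(u i1 0)^+2*(t i1 0) - 1%:R*(u i0 0)^+2*(t i1 0) - 2%:R*s*(u i0 0)*(t i2 0) + 1%:R*s^+2*(t i1 0)).
Proof. rewrite EE sum3 !qrE !dotE !mxE /=; ring. Qed.

Lemma ent10 (R : comNzRingType) (s : R) (u t : 'cV[R]_3) :
  (crossmx t *m quat_rot s u) i1 i0 = (0 - 1%:R*(u i2 0)^+2*(t i2 0) - 1%:R*(u i1 0)^+2*(t i2 0) - 2%:R*(u i0 0)*(u i2 0)*(t i0 0) + 1%:R*(u i0 0)^+2*(t i2 0) - 2%:R*s*(u i1 0)*(t i0 0) + 1%:R*s^+2*(t i2 0)).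
Proof. rewrite EE sum3 !qrE !dotE !mxE /=; ring. Qed.

Lemma ent11 (R : comNzRingType) (s : R) (u t : 'cV[R]_3) :
  (crossmx t *m quat_rot s u) i1 i1 = (0 - 2%:R*(u i1 0)*(u i2 0)*(t i0 0) + 2%:R*(u i0 0)*(u i1 0)*(t i2 0) + 2%:R*s*(u i2 0)*(t i2 0) + 2%:R*s*(u i0 0)*(t i0 0)).
Proof. rewrite EE sum3 !qrE !dotE !mxE /=; ring. Qed.

Lemma ent12 (R : comNzRingType) (s : R) (u t : 'cV[R]_3) :
  (crossmx t *m quat_rot s u) i1 i2 = (0 - 1%:R*(u i2 0)^+2*(t i0 0) + 1%:R*(u i1 0)^+2*(t i0 0) + 2%:R*(u i0 0)*(u i2 0)*(t i2 0) + 1%:R*(u i0 0)^+2*(t i0 0) - 2%:R*s*(u i1 0)*(t i2 0) - 1%:R*s^+2*(t i0 0)).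
Proof. rewrite EE sum3 !qrE !dotE !mxE /=; ring. Qed.

Lemma ent20 (R : comNzRingType) (s : R) (u t : 'cV[R]_3) :
  (crossmx t *m quat_rot s u) i2 i0 = (1%:R*(u i2 0)^+2*(t i1 0) + 1%:R*(u i1 0)^+2*(t i1 0) + 2%:R*(u i0 0)*(u i1 0)*(t i0 0) - 1%:R*(u i0 0)^+2*(t i1 0) - 2%:R*s*(u i2 0)*(t i0 0) - 1%:R*s^+2*(t i1 0)).
Proof. rewrite EE sum3 !qrE !dotE !mxE /=; ring. Qed.

Lemma ent21 (R : comNzRingType) (s : R) (u t : 'cV[R]_3) :
  (crossmx t *m quat_rot s u) i2 i1 = (0 - 1%:R*(u i2 0)^+2*(t i0 0) + 1%:R*(u i1 0)^+2*(t i0 0) - 2%:R*(u i0 0)*(u i1 0)*(t i1 0) - 1%:R*(u i0 0)^+2*(t i0 0) - 2%:R*s*(u i2 0)*(t i1 0) + 1%:R*s^+2*(t i0 0)).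
Proof. rewrite EE sum3 !qrE !dotE !mxE /=; ring. Qed.

Lemma ent22 (R : comNzRingType) (s : R) (u t : 'cV[R]_3) :
  (crossmx t *m quat_rot s u) i2 i2 = (2%:R*(u i1 0)*(u i2 0)*(t i0 0) - 2%:R*(u i0 0)*(u i2 0)*(t i1 0) + 2%:R*s*(u i1 0)*(t i1 0) + 2%:R*s*(u i0 0)*(t i0 0)).
Proof. rewrite EE sum3 !qrE !dotE !mxE /=; ring. Qed.

Lemma entT (R : comNzRingType) (s : R) (u : 'cV[R]_3) :
  mxtrace (quat_rot s u) + 1 = (1%:R - 1%:R*(u i2 0)^+2 - 1%:R*(u i1 0)^+2 - 1%:R*(u i0 0)^+2 + 3%:R*s^+2).
Proof. rewrite trE !qrE !dotE !mxE /=; ring. Qed.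

Lemma poly0 (R : comNzRingType) (sigma a b c x y z e00 e01 e02 e10 e11 e12 e20 e21 e22 tau : R) :
  e00 = (2%:R*a*c*y - 2%:R*a*b*z + 2%:R*sigma*c*z + 2%:R*sigma*b*y) -> e01 = (1%:R*c^+2*z + 2%:R*b*c*y - 1%:R*b^+2*z + 1%:R*a^+2*z - 2%:R*sigma*a*y - 1%:R*sigma^+2*z) -> e02 = (1%:R*c^+2*y - 2%:R*b*c*z - 1%:R*b^+2*y - 1%:R*a^+2*y - 2%:R*sigma*a*z + 1%:R*sigma^+2*y) -> e10 = (0 - 1%:R*c^+2*z - 1%:R*b^+2*z - 2%:R*a*c*x + 1%:R*a^+2*z - 2%:R*sigma*b*x + 1%:R*sigma^+2*z) -> e11 = (0 - 2%:R*b*c*x + 2%:R*a*b*z + 2%:R*sigma*c*z + 2%:R*sigma*a*x) -> e12 = (0 - 1%:R*c^+2*x + 1%:R*b^+2*x + 2%:R*a*c*z + 1%:R*a^+2*x - 2%:R*sigma*b*z - 1%:R*sigma^+2*x) -> e20 = (1%:R*c^+2*y + 1%:R*b^+2*y + 2%:R*a*b*x - 1%:R*a^+2*y - 2%:R*sigma*c*x - 1%:R*sigma^+2*y) -> e21 = (0 - 1%:R*c^+2*x + 1%:R*b^+2*x - 2%:R*a*b*y - 1%:R*a^+2*x - 2%:R*sigma*c*y + 1%:R*sigma^+2*x) -> e22 = (2%:R*b*c*x - 2%:R*a*c*y + 2%:R*sigma*b*y + 2%:R*sigma*a*x) -> tau = (1%:R - 1%:R*c^+2 - 1%:R*b^+2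 - 1%:R*a^+2 + 3%:R*sigma^+2) ->
  ((e20 - e02) * e00 * e12 + (e01 - e10) * e22 * e00 - (e12 - e21) * (e22 * e02 - e20 * e11 + e21 * e10 + e01 * e12)) * tau + 2%:R * (e01 - e10) * (e12 - e21) ^+ 2 =
  (sigma^+2 + (a*a+b*b+c*c) - 1) * (0 - 12%:R*a^+2*c^+4*z^+3 + 4%:R*a^+2*c^+4*y^+2*z + 4%:R*a^+2*c^+4*x^+2*z - 44%:R*a^+2*b*c^+3*y*z^+2 + 4%:R*a^+2*b*c^+3*y^+3 + 4%:R*a^+2*b*c^+3*x^+2*y + 4%:R*a^+2*b^+2*c^+2*z^+3 - 44%:R*a^+2*b^+2*c^+2*y^+2*z + 4%:R*a^+2*b^+2*c^+2*x^+2*z + 4%:R*a^+2*b^+3*c*y*z^+2 - 12%:R*a^+2*b^+3*c*y^+3 + 4%:R*a^+2*b^+3*c*x^+2*y - 44%:R*a^+3*c^+3*x*z^+2 + 4%:R*a^+3*c^+3*x*y^+2 + 4%:R*a^+3*c^+3*x^+3 - 96%:R*a^+3*b*c^+2*x*y*z + 4%:R*a^+3*b^+2*c*x*z^+2 - 44%:R*a^+3*b^+2*c*x*y^+2 + 4%:R*a^+3*b^+2*c*x^+3 + 4%:R*a^+4*c^+2*z^+3 + 4%:R*a^+4*c^+2*y^+2*z - 44%:R*a^+4*c^+2*x^+2*z + 4%:R*a^+4*b*c*y*z^+2 + 4%:R*a^+4*b*c*y^+3 - 44%:R*a^+4*b*c*x^+2*y + 4%:R*a^+5*c*x*z^+2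 + 4%:R*a^+5*c*x*y^+2 - 12%:R*a^+5*c*x^+3 - 4%:R*sigma*b*c^+4*x*z^+2 + 4%:R*sigma*b*c^+4*x*y^+2 - 16%:R*sigma*b^+2*c^+3*x*y*z - 16%:R*sigma*b^+4*c*x*y*z + 4%:R*sigma*b^+5*x*z^+2 - 4%:R*sigma*b^+5*x*y^+2 - 20%:R*sigma*a*c^+4*y*z^+2 - 4%:R*sigma*a*c^+4*y^+3 + 16%:R*sigma*a*b*c^+3*z^+3 - 32%:R*sigma*a*b*c^+3*y^+2*z - 8%:R*sigma*a*b*c^+3*x^+2*z + 24%:R*sigma*a*b^+2*c^+2*y*z^+2 - 24%:R*sigma*a*b^+2*c^+2*y^+3 - 8%:R*sigma*a*b^+2*c^+2*x^+2*y + 16%:R*sigma*a*b^+3*c*y^+2*z - 8%:R*sigma*a*b^+3*c*x^+2*z - 4%:R*sigma*a*b^+4*y*z^+2 - 4%:R*sigma*a*b^+4*y^+3 - 8%:R*sigma*a*b^+4*x^+2*y - 40%:R*sigma*a^+2*c^+3*x*y*z + 12%:R*sigma*a^+2*b*c^+2*x*z^+2 - 36%:R*sigma*a^+2*b*c^+2*x*y^+2 - 4%:R*sigma*a^+2*b*c^+2*x^+3 - 24%:R*sigma*a^+2*b^+2*c*x*y*z + 4%:R*sigma*a^+2*b^+3*x*z^+2 - 28%:R*sigma*a^+2*b^+3*x*y^+2 - 4%:R*sigma*a^+2*b^+3*x^+3 + 12%:R*sigma*a^+3*c^+2*y*z^+2 - 4%:R*sigma*a^+3*c^+2*y^+3 -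 20%:R*sigma*a^+3*c^+2*x^+2*y + 32%:R*sigma*a^+3*b*c*y^+2*z - 24%:R*sigma*a^+3*b*c*x^+2*z - 4%:R*sigma*a^+3*b^+2*y*z^+2 + 12%:R*sigma*a^+3*b^+2*y^+3 - 44%:R*sigma*a^+3*b^+2*x^+2*y + 24%:R*sigma*a^+4*c*x*y*z + 24%:R*sigma*a^+4*b*x*y^+2 - 20%:R*sigma*a^+4*b*x^+3 + 12%:R*sigma*a^+5*x^+2*y - 16%:R*sigma^+2*c^+4*y^+2*z - 4%:R*sigma^+2*c^+4*x^+2*z + 20%:R*sigma^+2*b*c^+3*y*z^+2 - 12%:R*sigma^+2*b*c^+3*y^+3 - 12%:R*sigma^+2*b*c^+3*x^+2*y - 4%:R*sigma^+2*b^+2*c^+2*z^+3 - 4%:R*sigma^+2*b^+2*c^+2*y^+2*z + 4%:R*sigma^+2*b^+2*c^+2*x^+2*z + 20%:R*sigma^+2*b^+3*c*y*z^+2 - 12%:R*sigma^+2*b^+3*c*y^+3 - 12%:R*sigma^+2*b^+3*c*x^+2*y - 4%:R*sigma^+2*b^+4*z^+3 + 12%:R*sigma^+2*b^+4*y^+2*z + 8%:R*sigma^+2*b^+4*x^+2*z + 36%:R*sigma^+2*a*c^+3*x*z^+2 - 4%:R*sigma^+2*a*c^+3*x*y^+2 - 4%:R*sigma^+2*a*c^+3*x^+3 + 40%:R*sigma^+2*a*b*c^+2*x*y*z + 36%:R*sigma^+2*a*b^+2*c*x*z^+2 - 4%:R*sigma^+2*a*b^+2*c*x*y^+2 - 4%:R*sigma^+2*a*b^+2*c*x^+3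 + 40%:R*sigma^+2*a*b^+3*x*y*z + 4%:R*sigma^+2*a^+2*c^+2*z^+3 + 20%:R*sigma^+2*a^+2*c^+2*y^+2*z + 68%:R*sigma^+2*a^+2*c^+2*x^+2*z - 8%:R*sigma^+2*a^+2*b*c*y*z^+2 + 24%:R*sigma^+2*a^+2*b*c*y^+3 + 24%:R*sigma^+2*a^+2*b*c*x^+2*y - 4%:R*sigma^+2*a^+2*b^+2*z^+3 - 20%:R*sigma^+2*a^+2*b^+2*y^+2*z + 44%:R*sigma^+2*a^+2*b^+2*x^+2*z + 8%:R*sigma^+2*a^+3*c*x*z^+2 + 32%:R*sigma^+2*a^+3*c*x*y^+2 + 32%:R*sigma^+2*a^+3*c*x^+3 - 24%:R*sigma^+2*a^+3*b*x*y*z + 4%:R*sigma^+2*a^+4*x^+2*z + 32%:R*sigma^+3*c^+3*x*y*z - 28%:R*sigma^+3*b*c^+2*x*z^+2 + 12%:R*sigma^+3*b*c^+2*x*y^+2 + 4%:R*sigma^+3*b*c^+2*x^+3 + 16%:R*sigma^+3*b^+2*c*x*y*z - 20%:R*sigma^+3*b^+3*x*z^+2 + 4%:R*sigma^+3*b^+3*x*y^+2 + 4%:R*sigma^+3*b^+3*x^+3 + 28%:R*sigma^+3*a*c^+2*y*z^+2 + 12%:R*sigma^+3*a*c^+2*y^+3 + 20%:R*sigma^+3*a*c^+2*x^+2*y - 16%:R*sigma^+3*a*b*c*z^+3 + 16%:R*sigma^+3*a*b*c*y^+2*z + 8%:R*sigma^+3*a*b*c*x^+2*z - 4%:R*sigma^+3*a*b^+2*y*z^+2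 + 12%:R*sigma^+3*a*b^+2*y^+3 + 28%:R*sigma^+3*a*b^+2*x^+2*y + 24%:R*sigma^+3*a^+2*c*x*y*z - 24%:R*sigma^+3*a^+2*b*x*z^+2 + 32%:R*sigma^+3*a^+2*b*x^+3 - 16%:R*sigma^+3*a^+3*x^+2*y + 16%:R*sigma^+4*c^+2*y^+2*z - 24%:R*sigma^+4*c^+2*x^+2*z - 28%:R*sigma^+4*b*c*y*z^+2 + 4%:R*sigma^+4*b*c*y^+3 + 4%:R*sigma^+4*b*c*x^+2*y + 12%:R*sigma^+4*b^+2*z^+3 - 4%:R*sigma^+4*b^+2*y^+2*z - 28%:R*sigma^+4*b^+2*x^+2*z - 12%:R*sigma^+4*a*c*x*z^+2 - 20%:R*sigma^+4*a*c*x*y^+2 - 20%:R*sigma^+4*a*c*x^+3 + 8%:R*sigma^+4*a*b*x*y*z - 16%:R*sigma^+4*a^+2*x^+2*z - 32%:R*sigma^+5*c*x*y*z + 24%:R*sigma^+5*b*x*z^+2 - 8%:R*sigma^+5*b*x*y^+2 - 12%:R*sigma^+5*b*x^+3 + 4%:R*sigma^+5*a*x^+2*y + 12%:R*sigma^+6*x^+2*z) + (a*x+b*y+c*z) * (16%:R*a^+2*c^+5*z^+2 + 32%:R*a^+2*b*c^+4*y*z + 16%:R*a^+2*b^+2*c^+3*z^+2 + 16%:R*a^+2*b^+2*c^+3*y^+2 + 32%:R*a^+2*b^+3*c^+2*y*z + 16%:R*a^+2*b^+4*c*y^+2 + 32%:R*a^+3*c^+4*x*z + 32%:R*a^+3*b*c^+3*x*y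 + 32%:R*a^+3*b^+2*c^+2*x*z + 32%:R*a^+3*b^+3*c*x*y + 16%:R*a^+4*c^+3*z^+2 + 16%:R*a^+4*c^+3*x^+2 + 32%:R*a^+4*b*c^+2*y*z + 16%:R*a^+4*b^+2*c*y^+2 + 16%:R*a^+4*b^+2*c*x^+2 + 32%:R*a^+5*c^+2*x*z + 32%:R*a^+5*b*c*x*y + 16%:R*a^+6*c*x^+2 + 32%:R*sigma*a*c^+5*y*z - 32%:R*sigma*a*b*c^+4*z^+2 + 32%:R*sigma*a*b*c^+4*y^+2 - 32%:R*sigma*a*b^+3*c^+2*z^+2 + 32%:R*sigma*a*b^+3*c^+2*y^+2 - 32%:R*sigma*a*b^+4*c*y*z + 32%:R*sigma*a^+2*c^+4*x*y - 16%:R*sigma*a^+2*b*c^+3*x*z + 48%:R*sigma*a^+2*b^+2*c^+2*x*y - 16%:R*sigma*a^+2*b^+3*c*x*z + 16%:R*sigma*a^+2*b^+4*x*y + 16%:R*sigma*a^+3*c^+3*y*z - 32%:R*sigma*a^+3*b*c^+2*z^+2 + 16%:R*sigma*a^+3*b*c^+2*y^+2 + 16%:R*sigma*a^+3*b*c^+2*x^+2 - 48%:R*sigma*a^+3*b^+2*c*y*z - 16%:R*sigma*a^+3*b^+3*y^+2 + 16%:R*sigma*a^+3*b^+3*x^+2 + 16%:R*sigma*a^+4*c^+2*x*y - 16%:R*sigma*a^+4*b*c*x*z - 16%:R*sigma*a^+5*c*y*z - 16%:R*sigma*a^+5*b*y^+2 + 16%:R*sigma*a^+5*b*x^+2 -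 16%:R*sigma*a^+6*x*y + 16%:R*sigma^+2*c^+5*y^+2 - 32%:R*sigma^+2*b*c^+4*y*z + 16%:R*sigma^+2*b^+2*c^+3*z^+2 + 16%:R*sigma^+2*b^+2*c^+3*y^+2 - 32%:R*sigma^+2*b^+3*c^+2*y*z + 16%:R*sigma^+2*b^+4*c*z^+2 - 32%:R*sigma^+2*a*c^+4*x*z - 64%:R*sigma^+2*a*b^+2*c^+2*x*z - 32%:R*sigma^+2*a*b^+4*x*z - 16%:R*sigma^+2*a^+2*c^+3*z^+2 - 32%:R*sigma^+2*a^+2*c^+3*y^+2 - 48%:R*sigma^+2*a^+2*c^+3*x^+2 + 16%:R*sigma^+2*a^+2*b*c^+2*y*z - 16%:R*sigma^+2*a^+2*b^+2*c*z^+2 - 32%:R*sigma^+2*a^+2*b^+2*c*y^+2 - 48%:R*sigma^+2*a^+2*b^+2*c*x^+2 + 16%:R*sigma^+2*a^+2*b^+3*y*z - 16%:R*sigma^+2*a^+3*c^+2*x*z + 32%:R*sigma^+2*a^+3*b*c*x*y - 48%:R*sigma^+2*a^+3*b^+2*x*z - 32%:R*sigma^+2*a^+4*c*z^+2 - 48%:R*sigma^+2*a^+4*c*y^+2 - 32%:R*sigma^+2*a^+4*c*x^+2 + 16%:R*sigma^+2*a^+4*b*y*z - 16%:R*sigma^+2*a^+5*x*z - 32%:R*sigma^+3*c^+4*x*y + 48%:R*sigma^+3*b*c^+3*x*z - 16%:R*sigma^+3*b^+2*c^+2*x*y + 48%:R*sigma^+3*b^+3*c*x*z + 16%:R*sigma^+3*b^+4*x*y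 - 48%:R*sigma^+3*a*c^+3*y*z + 64%:R*sigma^+3*a*b*c^+2*z^+2 - 16%:R*sigma^+3*a*b*c^+2*y^+2 - 16%:R*sigma^+3*a*b*c^+2*x^+2 + 16%:R*sigma^+3*a*b^+2*c*y*z + 32%:R*sigma^+3*a*b^+3*z^+2 + 16%:R*sigma^+3*a*b^+3*y^+2 - 16%:R*sigma^+3*a*b^+3*x^+2 - 16%:R*sigma^+3*a^+2*c^+2*x*y + 96%:R*sigma^+3*a^+2*b*c*x*z + 80%:R*sigma^+3*a^+2*b^+2*x*y - 32%:R*sigma^+3*a^+3*c*y*z + 32%:R*sigma^+3*a^+3*b*z^+2 + 32%:R*sigma^+3*a^+4*x*y + 32%:R*sigma^+4*c^+3*x^+2 + 48%:R*sigma^+4*b*c^+2*y*z - 48%:R*sigma^+4*b^+2*c*z^+2 + 48%:R*sigma^+4*b^+2*c*y^+2 + 32%:R*sigma^+4*b^+2*c*x^+2 - 48%:R*sigma^+4*b^+3*y*z - 16%:R*sigma^+4*a*c^+2*x*z - 16%:R*sigma^+4*a*b^+2*x*z + 32%:R*sigma^+4*a^+2*c*z^+2 - 16%:R*sigma^+4*a^+2*c*x^+2 + 32%:R*sigma^+4*a^+2*b*y*z + 64%:R*sigma^+4*a^+3*x*z - 16%:R*sigma^+5*b*c*x*z - 16%:R*sigma^+5*b^+2*x*y - 16%:R*sigma^+5*a*c*y*z - 32%:R*sigma^+5*a*b*z^+2 - 48%:R*sigma^+5*a*b*y^+2 - 16%:R*sigma^+5*a*b*x^+2 - 48%:R*sigma^+5*a^+2*x*y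 - 16%:R*sigma^+6*c*y^+2 + 32%:R*sigma^+6*c*x^+2 + 16%:R*sigma^+6*b*y*z - 48%:R*sigma^+6*a*x*z + 32%:R*sigma^+7*x*y).
Proof. by move=> -> -> -> -> -> -> -> -> -> ->; ring. Qed.

Lemma poly1 (R : comNzRingType) (sigma a b c x y z e00 e01 e02 e10 e11 e12 e20 e21 e22 tau : R) :
  e00 = (2%:R*a*c*y - 2%:R*a*b*z + 2%:R*sigma*c*z + 2%:R*sigma*b*y) -> e01 = (1%:R*c^+2*z + 2%:R*b*c*y - 1%:R*b^+2*z + 1%:R*a^+2*z - 2%:R*sigma*a*y - 1%:R*sigma^+2*z) -> e02 = (1%:R*c^+2*y - 2%:R*b*c*z - 1%:R*b^+2*y - 1%:R*a^+2*y - 2%:R*sigma*a*z + 1%:R*sigma^+2*y) -> e10 = (0 - 1%:R*c^+2*z - 1%:R*b^+2*z - 2%:R*a*c*x + 1%:R*a^+2*z - 2%:R*sigma*b*x + 1%:R*sigma^+2*z) -> e11 = (0 - 2%:R*b*c*x + 2%:R*a*b*z + 2%:R*sigma*c*z + 2%:R*sigma*a*x) -> e12 = (0 - 1%:R*c^+2*x + 1%:R*b^+2*x + 2%:R*a*c*z + 1%:R*a^+2*x - 2%:R*sigma*b*z - 1%:R*sigma^+2*x) -> e20 = (1%:R*c^+2*y + 1%:R*b^+2*y + 2%:R*a*b*x - 1%:R*a^+2*y - 2%:R*sigma*c*x - 1%:R*sigma^+2*y) -> e21 = (0 - 1%:R*c^+2*x + 1%:R*b^+2*x - 2%:R*a*b*y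 - 1%:R*a^+2*x - 2%:R*sigma*c*y + 1%:R*sigma^+2*x) -> e22 = (2%:R*b*c*x - 2%:R*a*c*y + 2%:R*sigma*b*y + 2%:R*sigma*a*x) -> tau = (1%:R - 1%:R*c^+2 - 1%:R*b^+2 - 1%:R*a^+2 + 3%:R*sigma^+2) ->
  ((e10 - e01) * e00 * e21 + (e02 - e20) * e11 * e00 - (e21 - e12) * (e11 * e01 - e10 * e22 + e12 * e20 + e02 * e21)) * tau + 2%:R * (e02 - e20) * (e21 - e12) ^+ 2 =
  (sigma^+2 + (a*a+b*b+c*c) - 1) * (12%:R*a^+2*b*c^+3*z^+3 - 4%:R*a^+2*b*c^+3*y^+2*z - 4%:R*a^+2*b*c^+3*x^+2*z + 44%:R*a^+2*b^+2*c^+2*y*z^+2 - 4%:R*a^+2*b^+2*c^+2*y^+3 - 4%:R*a^+2*b^+2*c^+2*x^+2*y - 4%:R*a^+2*b^+3*c*z^+3 + 44%:R*a^+2*b^+3*c*y^+2*z - 4%:R*a^+2*b^+3*c*x^+2*z - 4%:R*a^+2*b^+4*y*z^+2 + 12%:R*a^+2*b^+4*y^+3 - 4%:R*a^+2*b^+4*x^+2*y + 44%:R*a^+3*b*c^+2*x*z^+2 - 4%:R*a^+3*b*c^+2*x*y^+2 - 4%:R*a^+3*b*c^+2*x^+3 + 96%:R*a^+3*b^+2*c*x*y*z - 4%:R*a^+3*b^+3*x*z^+2 + 44%:R*a^+3*b^+3*x*y^+2 - 4%:R*a^+3*b^+3*x^+3 - 4%:R*a^+4*b*c*z^+3 - 4%:R*a^+4*b*c*y^+2*z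 + 44%:R*a^+4*b*c*x^+2*z - 4%:R*a^+4*b^+2*y*z^+2 - 4%:R*a^+4*b^+2*y^+3 + 44%:R*a^+4*b^+2*x^+2*y - 4%:R*a^+5*b*x*z^+2 - 4%:R*a^+5*b*x*y^+2 + 12%:R*a^+5*b*x^+3 - 4%:R*sigma*c^+5*x*z^+2 + 4%:R*sigma*c^+5*x*y^+2 - 16%:R*sigma*b*c^+4*x*y*z - 16%:R*sigma*b^+3*c^+2*x*y*z + 4%:R*sigma*b^+4*c*x*z^+2 - 4%:R*sigma*b^+4*c*x*y^+2 - 4%:R*sigma*a*c^+4*z^+3 - 4%:R*sigma*a*c^+4*y^+2*z - 8%:R*sigma*a*c^+4*x^+2*z + 16%:R*sigma*a*b*c^+3*y*z^+2 - 8%:R*sigma*a*b*c^+3*x^+2*y - 24%:R*sigma*a*b^+2*c^+2*z^+3 + 24%:R*sigma*a*b^+2*c^+2*y^+2*z - 8%:R*sigma*a*b^+2*c^+2*x^+2*z - 32%:R*sigma*a*b^+3*c*y*z^+2 + 16%:R*sigma*a*b^+3*c*y^+3 - 8%:R*sigma*a*b^+3*c*x^+2*y - 4%:R*sigma*a*b^+4*z^+3 - 20%:R*sigma*a*b^+4*y^+2*z - 28%:R*sigma*a^+2*c^+3*x*z^+2 + 4%:R*sigma*a^+2*c^+3*x*y^+2 - 4%:R*sigma*a^+2*c^+3*x^+3 - 24%:R*sigma*a^+2*b*c^+2*x*y*z - 36%:R*sigma*a^+2*b^+2*c*x*z^+2 + 12%:R*sigma*a^+2*b^+2*c*x*y^+2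 - 4%:R*sigma*a^+2*b^+2*c*x^+3 - 40%:R*sigma*a^+2*b^+3*x*y*z + 12%:R*sigma*a^+3*c^+2*z^+3 - 4%:R*sigma*a^+3*c^+2*y^+2*z - 44%:R*sigma*a^+3*c^+2*x^+2*z + 32%:R*sigma*a^+3*b*c*y*z^+2 - 24%:R*sigma*a^+3*b*c*x^+2*y - 4%:R*sigma*a^+3*b^+2*z^+3 + 12%:R*sigma*a^+3*b^+2*y^+2*z - 20%:R*sigma*a^+3*b^+2*x^+2*z + 24%:R*sigma*a^+4*c*x*z^+2 - 20%:R*sigma*a^+4*c*x^+3 + 24%:R*sigma*a^+4*b*x*y*z + 12%:R*sigma*a^+5*x^+2*z - 12%:R*sigma^+2*c^+4*y*z^+2 + 4%:R*sigma^+2*c^+4*y^+3 - 8%:R*sigma^+2*c^+4*x^+2*y + 12%:R*sigma^+2*b*c^+3*z^+3 - 20%:R*sigma^+2*b*c^+3*y^+2*z + 12%:R*sigma^+2*b*c^+3*x^+2*z + 4%:R*sigma^+2*b^+2*c^+2*y*z^+2 + 4%:R*sigma^+2*b^+2*c^+2*y^+3 - 4%:R*sigma^+2*b^+2*c^+2*x^+2*y + 12%:R*sigma^+2*b^+3*c*z^+3 - 20%:R*sigma^+2*b^+3*c*y^+2*z + 12%:R*sigma^+2*b^+3*c*x^+2*z + 16%:R*sigma^+2*b^+4*y*z^+2 + 4%:R*sigma^+2*b^+4*x^+2*y - 40%:R*sigma^+2*a*c^+3*x*y*z + 4%:R*sigma^+2*a*b*c^+2*x*z^+2 - 36%:R*sigma^+2*a*b*c^+2*x*y^+2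 + 4%:R*sigma^+2*a*b*c^+2*x^+3 - 40%:R*sigma^+2*a*b^+2*c*x*y*z + 4%:R*sigma^+2*a*b^+3*x*z^+2 - 36%:R*sigma^+2*a*b^+3*x*y^+2 + 4%:R*sigma^+2*a*b^+3*x^+3 + 20%:R*sigma^+2*a^+2*c^+2*y*z^+2 + 4%:R*sigma^+2*a^+2*c^+2*y^+3 - 44%:R*sigma^+2*a^+2*c^+2*x^+2*y - 24%:R*sigma^+2*a^+2*b*c*z^+3 + 8%:R*sigma^+2*a^+2*b*c*y^+2*z - 24%:R*sigma^+2*a^+2*b*c*x^+2*z - 20%:R*sigma^+2*a^+2*b^+2*y*z^+2 - 4%:R*sigma^+2*a^+2*b^+2*y^+3 - 68%:R*sigma^+2*a^+2*b^+2*x^+2*y + 24%:R*sigma^+2*a^+3*c*x*y*z - 32%:R*sigma^+2*a^+3*b*x*z^+2 - 8%:R*sigma^+2*a^+3*b*x*y^+2 - 32%:R*sigma^+2*a^+3*b*x^+3 - 4%:R*sigma^+2*a^+4*x^+2*y + 4%:R*sigma^+3*c^+3*x*z^+2 - 20%:R*sigma^+3*c^+3*x*y^+2 + 4%:R*sigma^+3*c^+3*x^+3 + 16%:R*sigma^+3*b*c^+2*x*y*z + 12%:R*sigma^+3*b^+2*c*x*z^+2 - 28%:R*sigma^+3*b^+2*c*x*y^+2 + 4%:R*sigma^+3*b^+2*c*x^+3 + 32%:R*sigma^+3*b^+3*x*y*z + 12%:R*sigma^+3*a*c^+2*z^+3 - 4%:R*sigma^+3*a*c^+2*y^+2*z +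 28%:R*sigma^+3*a*c^+2*x^+2*z + 16%:R*sigma^+3*a*b*c*y*z^+2 - 16%:R*sigma^+3*a*b*c*y^+3 + 8%:R*sigma^+3*a*b*c*x^+2*y + 12%:R*sigma^+3*a*b^+2*z^+3 + 28%:R*sigma^+3*a*b^+2*y^+2*z + 20%:R*sigma^+3*a*b^+2*x^+2*z - 24%:R*sigma^+3*a^+2*c*x*y^+2 + 32%:R*sigma^+3*a^+2*c*x^+3 + 24%:R*sigma^+3*a^+2*b*x*y*z - 16%:R*sigma^+3*a^+3*x^+2*z + 4%:R*sigma^+4*c^+2*y*z^+2 - 12%:R*sigma^+4*c^+2*y^+3 + 28%:R*sigma^+4*c^+2*x^+2*y - 4%:R*sigma^+4*b*c*z^+3 + 28%:R*sigma^+4*b*c*y^+2*z - 4%:R*sigma^+4*b*c*x^+2*z - 16%:R*sigma^+4*b^+2*y*z^+2 + 24%:R*sigma^+4*b^+2*x^+2*y - 8%:R*sigma^+4*a*c*x*y*z + 20%:R*sigma^+4*a*b*x*z^+2 + 12%:R*sigma^+4*a*b*x*y^+2 + 20%:R*sigma^+4*a*b*x^+3 + 16%:R*sigma^+4*a^+2*x^+2*y - 8%:R*sigma^+5*c*x*z^+2 + 24%:R*sigma^+5*c*x*y^+2 - 12%:R*sigma^+5*c*x^+3 - 32%:R*sigma^+5*b*x*y*z + 4%:R*sigma^+5*a*x^+2*z - 12%:R*sigma^+6*x^+2*y) + (a*x+b*y+c*z) * (0 - 16%:R*a^+2*b*c^+4*z^+2 - 32%:R*a^+2*b^+2*c^+3*y*z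 - 16%:R*a^+2*b^+3*c^+2*z^+2 - 16%:R*a^+2*b^+3*c^+2*y^+2 - 32%:R*a^+2*b^+4*c*y*z - 16%:R*a^+2*b^+5*y^+2 - 32%:R*a^+3*b*c^+3*x*z - 32%:R*a^+3*b^+2*c^+2*x*y - 32%:R*a^+3*b^+3*c*x*z - 32%:R*a^+3*b^+4*x*y - 16%:R*a^+4*b*c^+2*z^+2 - 16%:R*a^+4*b*c^+2*x^+2 - 32%:R*a^+4*b^+2*c*y*z - 16%:R*a^+4*b^+3*y^+2 - 16%:R*a^+4*b^+3*x^+2 - 32%:R*a^+5*b*c*x*z - 32%:R*a^+5*b^+2*x*y - 16%:R*a^+6*b*x^+2 - 32%:R*sigma*a*b*c^+4*y*z + 32%:R*sigma*a*b^+2*c^+3*z^+2 - 32%:R*sigma*a*b^+2*c^+3*y^+2 + 32%:R*sigma*a*b^+4*c*z^+2 - 32%:R*sigma*a*b^+4*c*y^+2 + 32%:R*sigma*a*b^+5*y*z + 16%:R*sigma*a^+2*c^+4*x*z - 16%:R*sigma*a^+2*b*c^+3*x*y + 48%:R*sigma*a^+2*b^+2*c^+2*x*z - 16%:R*sigma*a^+2*b^+3*c*x*y + 32%:R*sigma*a^+2*b^+4*x*z - 16%:R*sigma*a^+3*c^+3*z^+2 + 16%:R*sigma*a^+3*c^+3*x^+2 - 48%:R*sigma*a^+3*b*c^+2*y*z + 16%:R*sigma*a^+3*b^+2*c*z^+2 - 32%:R*sigma*a^+3*b^+2*c*y^+2 + 16%:R*sigma*a^+3*b^+2*c*x^+2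 + 16%:R*sigma*a^+3*b^+3*y*z - 16%:R*sigma*a^+4*b*c*x*y + 16%:R*sigma*a^+4*b^+2*x*z - 16%:R*sigma*a^+5*c*z^+2 + 16%:R*sigma*a^+5*c*x^+2 - 16%:R*sigma*a^+5*b*y*z - 16%:R*sigma*a^+6*x*z - 16%:R*sigma^+2*b*c^+4*y^+2 + 32%:R*sigma^+2*b^+2*c^+3*y*z - 16%:R*sigma^+2*b^+3*c^+2*z^+2 - 16%:R*sigma^+2*b^+3*c^+2*y^+2 + 32%:R*sigma^+2*b^+4*c*y*z - 16%:R*sigma^+2*b^+5*z^+2 + 32%:R*sigma^+2*a*c^+4*x*y + 64%:R*sigma^+2*a*b^+2*c^+2*x*y + 32%:R*sigma^+2*a*b^+4*x*y - 16%:R*sigma^+2*a^+2*c^+3*y*z + 32%:R*sigma^+2*a^+2*b*c^+2*z^+2 + 16%:R*sigma^+2*a^+2*b*c^+2*y^+2 + 48%:R*sigma^+2*a^+2*b*c^+2*x^+2 - 16%:R*sigma^+2*a^+2*b^+2*c*y*z + 32%:R*sigma^+2*a^+2*b^+3*z^+2 + 16%:R*sigma^+2*a^+2*b^+3*y^+2 + 48%:R*sigma^+2*a^+2*b^+3*x^+2 + 48%:R*sigma^+2*a^+3*c^+2*x*y - 32%:R*sigma^+2*a^+3*b*c*x*z + 16%:R*sigma^+2*a^+3*b^+2*x*y - 16%:R*sigma^+2*a^+4*c*y*z + 48%:R*sigma^+2*a^+4*b*z^+2 + 32%:R*sigma^+2*a^+4*b*y^+2 + 32%:R*sigma^+2*a^+4*b*x^+2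 + 16%:R*sigma^+2*a^+5*x*y + 16%:R*sigma^+3*c^+4*x*z + 48%:R*sigma^+3*b*c^+3*x*y - 16%:R*sigma^+3*b^+2*c^+2*x*z + 48%:R*sigma^+3*b^+3*c*x*y - 32%:R*sigma^+3*b^+4*x*z + 16%:R*sigma^+3*a*c^+3*z^+2 + 32%:R*sigma^+3*a*c^+3*y^+2 - 16%:R*sigma^+3*a*c^+3*x^+2 + 16%:R*sigma^+3*a*b*c^+2*y*z - 16%:R*sigma^+3*a*b^+2*c*z^+2 + 64%:R*sigma^+3*a*b^+2*c*y^+2 - 16%:R*sigma^+3*a*b^+2*c*x^+2 - 48%:R*sigma^+3*a*b^+3*y*z + 80%:R*sigma^+3*a^+2*c^+2*x*z + 96%:R*sigma^+3*a^+2*b*c*x*y - 16%:R*sigma^+3*a^+2*b^+2*x*z + 32%:R*sigma^+3*a^+3*c*y^+2 - 32%:R*sigma^+3*a^+3*b*y*z + 32%:R*sigma^+3*a^+4*x*z + 48%:R*sigma^+4*c^+3*y*z - 48%:R*sigma^+4*b*c^+2*z^+2 + 48%:R*sigma^+4*b*c^+2*y^+2 - 32%:R*sigma^+4*b*c^+2*x^+2 - 48%:R*sigma^+4*b^+2*c*y*z - 32%:R*sigma^+4*b^+3*x^+2 + 16%:R*sigma^+4*a*c^+2*x*y + 16%:R*sigma^+4*a*b^+2*x*y - 32%:R*sigma^+4*a^+2*c*y*z - 32%:R*sigma^+4*a^+2*b*y^+2 + 16%:R*sigma^+4*a^+2*b*x^+2 - 64%:R*sigma^+4*a^+3*x*y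 - 16%:R*sigma^+5*c^+2*x*z - 16%:R*sigma^+5*b*c*x*y - 48%:R*sigma^+5*a*c*z^+2 - 32%:R*sigma^+5*a*c*y^+2 - 16%:R*sigma^+5*a*c*x^+2 - 16%:R*sigma^+5*a*b*y*z - 48%:R*sigma^+5*a^+2*x*z - 16%:R*sigma^+6*c*y*z + 16%:R*sigma^+6*b*z^+2 - 32%:R*sigma^+6*b*x^+2 + 48%:R*sigma^+6*a*x*y + 32%:R*sigma^+7*x*z).
Proof. by move=> -> -> -> -> -> -> -> -> -> ->; ring. Qed.

Lemma poly2 (R : comNzRingType) (sigma a b c x y z e00 e01 e02 e10 e11 e12 e20 e21 e22 tau : R) :
  e00 = (2%:R*a*c*y - 2%:R*a*b*z + 2%:R*sigma*c*z + 2%:R*sigma*b*y) -> e01 = (1%:R*c^+2*z + 2%:R*b*c*y - 1%:R*b^+2*z + 1%:R*a^+2*z - 2%:R*sigma*a*y - 1%:R*sigma^+2*z) -> e02 = (1%:R*c^+2*y - 2%:R*b*c*z - 1%:R*b^+2*y - 1%:R*a^+2*y - 2%:R*sigma*a*z + 1%:R*sigma^+2*y) -> e10 = (0 - 1%:R*c^+2*z - 1%:R*b^+2*z - 2%:R*a*c*x + 1%:R*a^+2*z - 2%:R*sigma*b*x + 1%:R*sigma^+2*z) -> e11 = (0 - 2%:R*b*c*x + 2%:R*a*b*z + 2%:R*sigma*c*z + 2%:R*sigma*a*x) -> e12 = (0 - 1%:R*c^+2*x + 1%:R*b^+2*x + 2%:R*a*c*z + 1%:R*a^+2*x - 2%:R*sigma*b*z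 - 1%:R*sigma^+2*x) -> e20 = (1%:R*c^+2*y + 1%:R*b^+2*y + 2%:R*a*b*x - 1%:R*a^+2*y - 2%:R*sigma*c*x - 1%:R*sigma^+2*y) -> e21 = (0 - 1%:R*c^+2*x + 1%:R*b^+2*x - 2%:R*a*b*y - 1%:R*a^+2*x - 2%:R*sigma*c*y + 1%:R*sigma^+2*x) -> e22 = (2%:R*b*c*x - 2%:R*a*c*y + 2%:R*sigma*b*y + 2%:R*sigma*a*x) -> tau = (1%:R - 1%:R*c^+2 - 1%:R*b^+2 - 1%:R*a^+2 + 3%:R*sigma^+2) ->
  ((e21 - e12) * e11 * e02 + (e10 - e01) * e22 * e11 - (e02 - e20) * (e22 * e12 - e21 * e00 + e20 * e01 + e10 * e02)) * tau + 2%:R * (e10 - e01) * (e02 - e20) ^+ 2 =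
  (sigma^+2 + (a*a+b*b+c*c) - 1) * (12%:R*b^+2*c^+4*z^+3 - 4%:R*b^+2*c^+4*y^+2*z - 4%:R*b^+2*c^+4*x^+2*z + 44%:R*b^+3*c^+3*y*z^+2 - 4%:R*b^+3*c^+3*y^+3 - 4%:R*b^+3*c^+3*x^+2*y - 4%:R*b^+4*c^+2*z^+3 + 44%:R*b^+4*c^+2*y^+2*z - 4%:R*b^+4*c^+2*x^+2*z - 4%:R*b^+5*c*y*z^+2 + 12%:R*b^+5*c*y^+3 - 4%:R*b^+5*c*x^+2*y + 44%:R*a*b^+2*c^+3*x*z^+2 - 4%:R*a*b^+2*c^+3*x*y^+2 - 4%:R*a*b^+2*c^+3*x^+3 + 96%:R*a*b^+3*c^+2*x*y*z - 4%:R*a*b^+4*c*x*z^+2 + 44%:R*a*b^+4*c*x*y^+2 - 4%:R*a*b^+4*c*x^+3 - 4%:R*a^+2*b^+2*c^+2*z^+3 - 4%:R*a^+2*b^+2*c^+2*y^+2*z + 44%:R*a^+2*b^+2*c^+2*x^+2*z - 4%:R*a^+2*b^+3*c*y*z^+2 - 4%:R*a^+2*b^+3*c*y^+3 + 44%:R*a^+2*b^+3*c*x^+2*y - 4%:R*a^+3*b^+2*c*x*z^+2 - 4%:R*a^+3*b^+2*c*x*y^+2 + 12%:R*a^+3*b^+2*c*x^+3 - 20%:R*sigma*b*c^+4*x*z^+2 - 4%:R*sigma*b*c^+4*x^+3 - 40%:R*sigma*b^+2*c^+3*x*y*z + 12%:R*sigma*b^+3*c^+2*x*z^+2 - 20%:R*sigma*b^+3*c^+2*x*y^+2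 - 4%:R*sigma*b^+3*c^+2*x^+3 + 24%:R*sigma*b^+4*c*x*y*z + 12%:R*sigma*b^+5*x*y^+2 - 4%:R*sigma*a*c^+4*y*z^+2 + 4%:R*sigma*a*c^+4*x^+2*y + 16%:R*sigma*a*b*c^+3*z^+3 - 8%:R*sigma*a*b*c^+3*y^+2*z - 32%:R*sigma*a*b*c^+3*x^+2*z + 12%:R*sigma*a*b^+2*c^+2*y*z^+2 - 4%:R*sigma*a*b^+2*c^+2*y^+3 - 36%:R*sigma*a*b^+2*c^+2*x^+2*y - 24%:R*sigma*a*b^+3*c*y^+2*z + 32%:R*sigma*a*b^+3*c*x^+2*z - 20%:R*sigma*a*b^+4*y^+3 + 24%:R*sigma*a*b^+4*x^+2*y - 16%:R*sigma*a^+2*c^+3*x*y*z + 24%:R*sigma*a^+2*b*c^+2*x*z^+2 - 8%:R*sigma*a^+2*b*c^+2*x*y^+2 - 24%:R*sigma*a^+2*b*c^+2*x^+3 - 24%:R*sigma*a^+2*b^+2*c*x*y*z - 4%:R*sigma*a^+2*b^+3*x*z^+2 - 44%:R*sigma*a^+2*b^+3*x*y^+2 + 12%:R*sigma*a^+2*b^+3*x^+3 - 8%:R*sigma*a^+3*b*c*y^+2*z + 16%:R*sigma*a^+3*b*c*x^+2*z + 4%:R*sigma*a^+3*b^+2*y*z^+2 - 4%:R*sigma*a^+3*b^+2*y^+3 - 28%:R*sigma*a^+3*b^+2*x^+2*y - 16%:R*sigma*a^+4*c*x*y*z - 4%:R*sigma*a^+4*b*x*z^+2 - 8%:R*sigma*a^+4*b*x*y^+2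 - 4%:R*sigma*a^+4*b*x^+3 + 4%:R*sigma*a^+5*y*z^+2 - 4%:R*sigma*a^+5*x^+2*y + 4%:R*sigma^+2*c^+4*y^+2*z + 16%:R*sigma^+2*c^+4*x^+2*z - 36%:R*sigma^+2*b*c^+3*y*z^+2 + 4%:R*sigma^+2*b*c^+3*y^+3 + 4%:R*sigma^+2*b*c^+3*x^+2*y - 4%:R*sigma^+2*b^+2*c^+2*z^+3 - 68%:R*sigma^+2*b^+2*c^+2*y^+2*z - 20%:R*sigma^+2*b^+2*c^+2*x^+2*z - 8%:R*sigma^+2*b^+3*c*y*z^+2 - 32%:R*sigma^+2*b^+3*c*y^+3 - 32%:R*sigma^+2*b^+3*c*x^+2*y - 4%:R*sigma^+2*b^+4*y^+2*z - 20%:R*sigma^+2*a*c^+3*x*z^+2 + 12%:R*sigma^+2*a*c^+3*x*y^+2 + 12%:R*sigma^+2*a*c^+3*x^+3 - 40%:R*sigma^+2*a*b*c^+2*x*y*z + 8%:R*sigma^+2*a*b^+2*c*x*z^+2 - 24%:R*sigma^+2*a*b^+2*c*x*y^+2 - 24%:R*sigma^+2*a*b^+2*c*x^+3 + 24%:R*sigma^+2*a*b^+3*x*y*z + 4%:R*sigma^+2*a^+2*c^+2*z^+3 - 4%:R*sigma^+2*a^+2*c^+2*y^+2*z + 4%:R*sigma^+2*a^+2*c^+2*x^+2*z - 36%:R*sigma^+2*a^+2*b*c*y*z^+2 + 4%:R*sigma^+2*a^+2*b*c*y^+3 + 4%:R*sigma^+2*a^+2*b*c*x^+2*y + 4%:R*sigma^+2*a^+2*b^+2*z^+3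 - 44%:R*sigma^+2*a^+2*b^+2*y^+2*z + 20%:R*sigma^+2*a^+2*b^+2*x^+2*z - 20%:R*sigma^+2*a^+3*c*x*z^+2 + 12%:R*sigma^+2*a^+3*c*x*y^+2 + 12%:R*sigma^+2*a^+3*c*x^+3 - 40%:R*sigma^+2*a^+3*b*x*y*z + 4%:R*sigma^+2*a^+4*z^+3 - 8%:R*sigma^+2*a^+4*y^+2*z - 12%:R*sigma^+2*a^+4*x^+2*z + 32%:R*sigma^+3*c^+3*x*y*z + 28%:R*sigma^+3*b*c^+2*x*z^+2 + 20%:R*sigma^+3*b*c^+2*x*y^+2 + 12%:R*sigma^+3*b*c^+2*x^+3 + 24%:R*sigma^+3*b^+2*c*x*y*z - 16%:R*sigma^+3*b^+3*x*y^+2 - 28%:R*sigma^+3*a*c^+2*y*z^+2 + 4%:R*sigma^+3*a*c^+2*y^+3 + 12%:R*sigma^+3*a*c^+2*x^+2*y - 16%:R*sigma^+3*a*b*c*z^+3 + 8%:R*sigma^+3*a*b*c*y^+2*z + 16%:R*sigma^+3*a*b*c*x^+2*z - 24%:R*sigma^+3*a*b^+2*y*z^+2 + 32%:R*sigma^+3*a*b^+2*y^+3 + 16%:R*sigma^+3*a^+2*c*x*y*z - 4%:R*sigma^+3*a^+2*b*x*z^+2 + 28%:R*sigma^+3*a^+2*b*x*y^+2 + 12%:R*sigma^+3*a^+2*b*x^+3 - 20%:R*sigma^+3*a^+3*y*z^+2 + 4%:R*sigma^+3*a^+3*y^+3 + 4%:R*sigma^+3*a^+3*x^+2*y + 24%:R*sigma^+4*c^+2*y^+2*z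 - 16%:R*sigma^+4*c^+2*x^+2*z + 12%:R*sigma^+4*b*c*y*z^+2 + 20%:R*sigma^+4*b*c*y^+3 + 20%:R*sigma^+4*b*c*x^+2*y + 16%:R*sigma^+4*b^+2*y^+2*z + 28%:R*sigma^+4*a*c*x*z^+2 - 4%:R*sigma^+4*a*c*x*y^+2 - 4%:R*sigma^+4*a*c*x^+3 - 8%:R*sigma^+4*a*b*x*y*z - 12%:R*sigma^+4*a^+2*z^+3 + 28%:R*sigma^+4*a^+2*y^+2*z + 4%:R*sigma^+4*a^+2*x^+2*z - 32%:R*sigma^+5*c*x*y*z + 4%:R*sigma^+5*b*x*y^+2 + 24%:R*sigma^+5*a*y*z^+2 - 12%:R*sigma^+5*a*y^+3 - 8%:R*sigma^+5*a*x^+2*y - 12%:R*sigma^+6*y^+2*z) + (a*x+b*y+c*z) * (0 - 16%:R*b^+2*c^+5*z^+2 - 32%:R*b^+3*c^+4*y*z - 16%:R*b^+4*c^+3*z^+2 - 16%:R*b^+4*c^+3*y^+2 - 32%:R*b^+5*c^+2*y*z - 16%:R*b^+6*c*y^+2 - 32%:R*a*b^+2*c^+4*x*z - 32%:R*a*b^+3*c^+3*x*y - 32%:R*a*b^+4*c^+2*x*z - 32%:R*a*b^+5*c*x*y - 16%:R*a^+2*b^+2*c^+3*z^+2 - 16%:R*a^+2*b^+2*c^+3*x^+2 - 32%:R*a^+2*b^+3*c^+2*y*z - 16%:R*a^+2*b^+4*c*y^+2 - 16%:R*a^+2*b^+4*c*x^+2 - 32%:R*a^+3*b^+2*c^+2*x*z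 - 32%:R*a^+3*b^+3*c*x*y - 16%:R*a^+4*b^+2*c*x^+2 + 32%:R*sigma*b*c^+5*x*z + 32%:R*sigma*b^+2*c^+4*x*y + 16%:R*sigma*b^+3*c^+3*x*z + 16%:R*sigma*b^+4*c^+2*x*y - 16%:R*sigma*b^+5*c*x*z - 16%:R*sigma*b^+6*x*y - 32%:R*sigma*a*b*c^+4*z^+2 + 32%:R*sigma*a*b*c^+4*x^+2 - 16%:R*sigma*a*b^+2*c^+3*y*z - 32%:R*sigma*a*b^+3*c^+2*z^+2 + 16%:R*sigma*a*b^+3*c^+2*y^+2 + 16%:R*sigma*a*b^+3*c^+2*x^+2 - 16%:R*sigma*a*b^+4*c*y*z + 16%:R*sigma*a*b^+5*y^+2 - 16%:R*sigma*a*b^+5*x^+2 + 48%:R*sigma*a^+2*b^+2*c^+2*x*y - 48%:R*sigma*a^+2*b^+3*c*x*z - 32%:R*sigma*a^+3*b*c^+2*z^+2 + 32%:R*sigma*a^+3*b*c^+2*x^+2 - 16%:R*sigma*a^+3*b^+2*c*y*z + 16%:R*sigma*a^+3*b^+3*y^+2 - 16%:R*sigma*a^+3*b^+3*x^+2 - 32%:R*sigma*a^+4*b*c*x*z + 16%:R*sigma*a^+4*b^+2*x*y - 16%:R*sigma^+2*c^+5*x^+2 + 32%:R*sigma^+2*b*c^+4*y*z + 16%:R*sigma^+2*b^+2*c^+3*z^+2 + 48%:R*sigma^+2*b^+2*c^+3*y^+2 + 32%:R*sigma^+2*b^+2*c^+3*x^+2 + 16%:R*sigma^+2*b^+3*c^+2*y*z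 + 32%:R*sigma^+2*b^+4*c*z^+2 + 32%:R*sigma^+2*b^+4*c*y^+2 + 48%:R*sigma^+2*b^+4*c*x^+2 + 16%:R*sigma^+2*b^+5*y*z + 32%:R*sigma^+2*a*c^+4*x*z - 16%:R*sigma^+2*a*b^+2*c^+2*x*z - 32%:R*sigma^+2*a*b^+3*c*x*y - 16%:R*sigma^+2*a*b^+4*x*z - 16%:R*sigma^+2*a^+2*c^+3*z^+2 - 16%:R*sigma^+2*a^+2*c^+3*x^+2 + 64%:R*sigma^+2*a^+2*b*c^+2*y*z + 16%:R*sigma^+2*a^+2*b^+2*c*z^+2 + 48%:R*sigma^+2*a^+2*b^+2*c*y^+2 + 32%:R*sigma^+2*a^+2*b^+2*c*x^+2 + 48%:R*sigma^+2*a^+2*b^+3*y*z + 32%:R*sigma^+2*a^+3*c^+2*x*z - 16%:R*sigma^+2*a^+3*b^+2*x*z - 16%:R*sigma^+2*a^+4*c*z^+2 + 32%:R*sigma^+2*a^+4*b*y*z - 32%:R*sigma^+3*c^+4*x*y - 48%:R*sigma^+3*b*c^+3*x*z - 16%:R*sigma^+3*b^+2*c^+2*x*y - 32%:R*sigma^+3*b^+3*c*x*z + 32%:R*sigma^+3*b^+4*x*y + 48%:R*sigma^+3*a*c^+3*y*z + 64%:R*sigma^+3*a*b*c^+2*z^+2 - 16%:R*sigma^+3*a*b*c^+2*y^+2 - 16%:R*sigma^+3*a*b*c^+2*x^+2 + 96%:R*sigma^+3*a*b^+2*c*y*z + 32%:R*sigma^+3*a*b^+3*z^+2 - 16%:R*sigma^+3*a^+2*c^+2*x*y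 + 16%:R*sigma^+3*a^+2*b*c*x*z + 80%:R*sigma^+3*a^+2*b^+2*x*y + 48%:R*sigma^+3*a^+3*c*y*z + 32%:R*sigma^+3*a^+3*b*z^+2 - 16%:R*sigma^+3*a^+3*b*y^+2 + 16%:R*sigma^+3*a^+3*b*x^+2 + 16%:R*sigma^+3*a^+4*x*y - 32%:R*sigma^+4*c^+3*y^+2 + 16%:R*sigma^+4*b*c^+2*y*z - 32%:R*sigma^+4*b^+2*c*z^+2 + 16%:R*sigma^+4*b^+2*c*y^+2 - 64%:R*sigma^+4*b^+3*y*z - 48%:R*sigma^+4*a*c^+2*x*z - 32%:R*sigma^+4*a*b^+2*x*z + 48%:R*sigma^+4*a^+2*c*z^+2 - 32%:R*sigma^+4*a^+2*c*y^+2 - 48%:R*sigma^+4*a^+2*c*x^+2 + 16%:R*sigma^+4*a^+2*b*y*z + 48%:R*sigma^+4*a^+3*x*z - 16%:R*sigma^+5*b*c*x*z - 48%:R*sigma^+5*b^+2*x*y - 16%:R*sigma^+5*a*c*y*z - 32%:R*sigma^+5*a*b*z^+2 - 16%:R*sigma^+5*a*b*y^+2 - 48%:R*sigma^+5*a*b*x^+2 - 16%:R*sigma^+5*a^+2*x*y - 32%:R*sigma^+6*c*y^+2 + 16%:R*sigma^+6*c*x^+2 + 48%:R*sigma^+6*b*y*z - 16%:R*sigma^+6*a*x*z + 32%:R*sigma^+7*x*y).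
Proof. by move=> -> -> -> -> -> -> -> -> -> ->; ring. Qed.

Lemma poly3 (R : comNzRingType) (sigma a b c x y z e00 e01 e02 e10 e11 e12 e20 e21 e22 tau : R) :
  e00 = (2%:R*a*c*y - 2%:R*a*b*z + 2%:R*sigma*c*z + 2%:R*sigma*b*y) -> e01 = (1%:R*c^+2*z + 2%:R*b*c*y - 1%:R*b^+2*z + 1%:R*a^+2*z - 2%:R*sigma*a*y - 1%:R*sigma^+2*z) -> e02 = (1%:R*c^+2*y - 2%:R*b*c*z - 1%:R*b^+2*y - 1%:R*a^+2*y - 2%:R*sigma*a*z + 1%:R*sigma^+2*y) -> e10 = (0 - 1%:R*c^+2*z - 1%:R*b^+2*z - 2%:R*a*c*x + 1%:R*a^+2*z - 2%:R*sigma*b*x + 1%:R*sigma^+2*z) -> e11 = (0 - 2%:R*b*c*x + 2%:R*a*b*z + 2%:R*sigma*c*z + 2%:R*sigma*a*x) -> e12 = (0 - 1%:R*c^+2*x + 1%:R*b^+2*x + 2%:R*a*c*z + 1%:R*a^+2*x - 2%:R*sigma*b*z - 1%:R*sigma^+2*x) -> e20 = (1%:R*c^+2*y + 1%:R*b^+2*y + 2%:R*a*b*x - 1%:R*a^+2*y - 2%:R*sigma*c*x - 1%:R*sigma^+2*y) -> e21 = (0 - 1%:R*c^+2*x + 1%:R*b^+2*x - 2%:R*a*b*y - 1%:R*a^+2*x - 2%:R*sigma*c*y + 1%:R*sigma^+2*x) -> e22 = (2%:R*b*c*x - 2%:R*a*c*y + 2%:R*sigma*b*y + 2%:R*sigma*a*x)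 -> tau = (1%:R - 1%:R*c^+2 - 1%:R*b^+2 - 1%:R*a^+2 + 3%:R*sigma^+2) ->
  ((e01 - e10) * e11 * e20 + (e12 - e21) * e00 * e11 - (e20 - e02) * (e00 * e10 - e01 * e22 + e02 * e21 + e12 * e20)) * tau + 2%:R * (e12 - e21) * (e20 - e02) ^+ 2 =
  (sigma^+2 + (a*a+b*b+c*c) - 1) * (0 - 12%:R*a*b^+2*c^+3*z^+3 + 4%:R*a*b^+2*c^+3*y^+2*z + 4%:R*a*b^+2*c^+3*x^+2*z - 44%:R*a*b^+3*c^+2*y*z^+2 + 4%:R*a*b^+3*c^+2*y^+3 + 4%:R*a*b^+3*c^+2*x^+2*y + 4%:R*a*b^+4*c*z^+3 - 44%:R*a*b^+4*c*y^+2*z + 4%:R*a*b^+4*c*x^+2*z + 4%:R*a*b^+5*y*z^+2 - 12%:R*a*b^+5*y^+3 + 4%:R*a*b^+5*x^+2*y - 44%:R*a^+2*b^+2*c^+2*x*z^+2 + 4%:R*a^+2*b^+2*c^+2*x*y^+2 + 4%:R*a^+2*b^+2*c^+2*x^+3 - 96%:R*a^+2*b^+3*c*x*y*z + 4%:R*a^+2*b^+4*x*z^+2 - 44%:R*a^+2*b^+4*x*y^+2 + 4%:R*a^+2*b^+4*x^+3 + 4%:R*a^+3*b^+2*c*z^+3 + 4%:R*a^+3*b^+2*c*y^+2*z - 44%:R*a^+3*b^+2*c*x^+2*z + 4%:R*a^+3*b^+3*y*z^+2 + 4%:R*a^+3*b^+3*y^+3 - 44%:R*a^+3*b^+3*x^+2*y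 + 4%:R*a^+4*b^+2*x*z^+2 + 4%:R*a^+4*b^+2*x*y^+2 - 12%:R*a^+4*b^+2*x^+3 - 4%:R*sigma*c^+5*y*z^+2 + 4%:R*sigma*c^+5*x^+2*y - 4%:R*sigma*b*c^+4*z^+3 - 8%:R*sigma*b*c^+4*y^+2*z - 4%:R*sigma*b*c^+4*x^+2*z - 28%:R*sigma*b^+2*c^+3*y*z^+2 - 4%:R*sigma*b^+2*c^+3*y^+3 + 4%:R*sigma*b^+2*c^+3*x^+2*y + 12%:R*sigma*b^+3*c^+2*z^+3 - 44%:R*sigma*b^+3*c^+2*y^+2*z - 4%:R*sigma*b^+3*c^+2*x^+2*z + 24%:R*sigma*b^+4*c*y*z^+2 - 20%:R*sigma*b^+4*c*y^+3 + 12%:R*sigma*b^+5*y^+2*z - 16%:R*sigma*a*c^+4*x*y*z + 16%:R*sigma*a*b*c^+3*x*z^+2 - 8%:R*sigma*a*b*c^+3*x*y^+2 - 24%:R*sigma*a*b^+2*c^+2*x*y*z + 32%:R*sigma*a*b^+3*c*x*z^+2 - 24%:R*sigma*a*b^+3*c*x*y^+2 + 24%:R*sigma*a*b^+4*x*y*z - 24%:R*sigma*a^+2*b*c^+2*z^+3 - 8%:R*sigma*a^+2*b*c^+2*y^+2*z + 24%:R*sigma*a^+2*b*c^+2*x^+2*z - 36%:R*sigma*a^+2*b^+2*c*y*z^+2 - 4%:R*sigma*a^+2*b^+2*c*y^+3 + 12%:R*sigma*a^+2*b^+2*c*x^+2*y - 4%:R*sigma*a^+2*b^+3*z^+3 -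 20%:R*sigma*a^+2*b^+3*y^+2*z + 12%:R*sigma*a^+2*b^+3*x^+2*z - 16%:R*sigma*a^+3*c^+2*x*y*z - 32%:R*sigma*a^+3*b*c*x*z^+2 - 8%:R*sigma*a^+3*b*c*x*y^+2 + 16%:R*sigma*a^+3*b*c*x^+3 - 40%:R*sigma*a^+3*b^+2*x*y*z + 4%:R*sigma*a^+4*c*y*z^+2 - 4%:R*sigma*a^+4*c*x^+2*y - 4%:R*sigma*a^+4*b*z^+3 - 20%:R*sigma*a^+4*b*x^+2*z + 12%:R*sigma^+2*c^+4*x*z^+2 + 8%:R*sigma^+2*c^+4*x*y^+2 - 4%:R*sigma^+2*c^+4*x^+3 + 40%:R*sigma^+2*b*c^+3*x*y*z - 20%:R*sigma^+2*b^+2*c^+2*x*z^+2 + 44%:R*sigma^+2*b^+2*c^+2*x*y^+2 - 4%:R*sigma^+2*b^+2*c^+2*x^+3 - 24%:R*sigma^+2*b^+3*c*x*y*z + 4%:R*sigma^+2*b^+4*x*y^+2 - 12%:R*sigma^+2*a*c^+3*z^+3 - 12%:R*sigma^+2*a*c^+3*y^+2*z + 20%:R*sigma^+2*a*c^+3*x^+2*z - 4%:R*sigma^+2*a*b*c^+2*y*z^+2 - 4%:R*sigma^+2*a*b*c^+2*y^+3 + 36%:R*sigma^+2*a*b*c^+2*x^+2*y + 24%:R*sigma^+2*a*b^+2*c*z^+3 + 24%:R*sigma^+2*a*b^+2*c*y^+2*z - 8%:R*sigma^+2*a*b^+2*c*x^+2*z + 32%:R*sigma^+2*a*b^+3*y*z^+2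 + 32%:R*sigma^+2*a*b^+3*y^+3 + 8%:R*sigma^+2*a*b^+3*x^+2*y - 4%:R*sigma^+2*a^+2*c^+2*x*z^+2 + 4%:R*sigma^+2*a^+2*c^+2*x*y^+2 - 4%:R*sigma^+2*a^+2*c^+2*x^+3 + 40%:R*sigma^+2*a^+2*b*c*x*y*z + 20%:R*sigma^+2*a^+2*b^+2*x*z^+2 + 68%:R*sigma^+2*a^+2*b^+2*x*y^+2 + 4%:R*sigma^+2*a^+2*b^+2*x^+3 - 12%:R*sigma^+2*a^+3*c*z^+3 - 12%:R*sigma^+2*a^+3*c*y^+2*z + 20%:R*sigma^+2*a^+3*c*x^+2*z - 4%:R*sigma^+2*a^+3*b*y*z^+2 - 4%:R*sigma^+2*a^+3*b*y^+3 + 36%:R*sigma^+2*a^+3*b*x^+2*y - 16%:R*sigma^+2*a^+4*x*z^+2 - 4%:R*sigma^+2*a^+4*x*y^+2 + 4%:R*sigma^+3*c^+3*y*z^+2 + 4%:R*sigma^+3*c^+3*y^+3 - 20%:R*sigma^+3*c^+3*x^+2*y + 12%:R*sigma^+3*b*c^+2*z^+3 + 28%:R*sigma^+3*b*c^+2*y^+2*z - 4%:R*sigma^+3*b*c^+2*x^+2*z + 32%:R*sigma^+3*b^+2*c*y^+3 - 24%:R*sigma^+3*b^+2*c*x^+2*y - 16%:R*sigma^+3*b^+3*y^+2*z + 16%:R*sigma^+3*a*c^+2*x*y*z + 16%:R*sigma^+3*a*b*c*x*z^+2 + 8%:R*sigma^+3*a*b*c*x*y^+2 - 16%:R*sigma^+3*a*b*c*x^+3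 + 24%:R*sigma^+3*a*b^+2*x*y*z + 12%:R*sigma^+3*a^+2*c*y*z^+2 + 4%:R*sigma^+3*a^+2*c*y^+3 - 28%:R*sigma^+3*a^+2*c*x^+2*y + 12%:R*sigma^+3*a^+2*b*z^+3 + 20%:R*sigma^+3*a^+2*b*y^+2*z + 28%:R*sigma^+3*a^+2*b*x^+2*z + 32%:R*sigma^+3*a^+3*x*y*z - 4%:R*sigma^+4*c^+2*x*z^+2 - 28%:R*sigma^+4*c^+2*x*y^+2 + 12%:R*sigma^+4*c^+2*x^+3 + 8%:R*sigma^+4*b*c*x*y*z - 16%:R*sigma^+4*b^+2*x*y^+2 + 4%:R*sigma^+4*a*c*z^+3 + 4%:R*sigma^+4*a*c*y^+2*z - 28%:R*sigma^+4*a*c*x^+2*z - 20%:R*sigma^+4*a*b*y*z^+2 - 20%:R*sigma^+4*a*b*y^+3 - 12%:R*sigma^+4*a*b*x^+2*y + 16%:R*sigma^+4*a^+2*x*z^+2 - 24%:R*sigma^+4*a^+2*x*y^+2 - 8%:R*sigma^+5*c*y*z^+2 - 12%:R*sigma^+5*c*y^+3 + 24%:R*sigma^+5*c*x^+2*y + 4%:R*sigma^+5*b*y^+2*z - 32%:R*sigma^+5*a*x*y*z + 12%:R*sigma^+6*x*y^+2) + (a*x+b*y+c*z) * (16%:R*a*b^+2*c^+4*z^+2 + 32%:R*a*b^+3*c^+3*y*z + 16%:R*a*b^+4*c^+2*z^+2 + 16%:R*a*b^+4*c^+2*y^+2 + 32%:R*a*b^+5*c*y*z + 16%:R*a*b^+6*y^+2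 + 32%:R*a^+2*b^+2*c^+3*x*z + 32%:R*a^+2*b^+3*c^+2*x*y + 32%:R*a^+2*b^+4*c*x*z + 32%:R*a^+2*b^+5*x*y + 16%:R*a^+3*b^+2*c^+2*z^+2 + 16%:R*a^+3*b^+2*c^+2*x^+2 + 32%:R*a^+3*b^+3*c*y*z + 16%:R*a^+3*b^+4*y^+2 + 16%:R*a^+3*b^+4*x^+2 + 32%:R*a^+4*b^+2*c*x*z + 32%:R*a^+4*b^+3*x*y + 16%:R*a^+5*b^+2*x^+2 + 16%:R*sigma*b^+2*c^+4*y*z - 16%:R*sigma*b^+3*c^+3*z^+2 + 16%:R*sigma*b^+3*c^+3*y^+2 - 16%:R*sigma*b^+5*c*z^+2 + 16%:R*sigma*b^+5*c*y^+2 - 16%:R*sigma*b^+6*y*z - 32%:R*sigma*a*b*c^+4*x*z - 16%:R*sigma*a*b^+2*c^+3*x*y - 48%:R*sigma*a*b^+3*c^+2*x*z - 16%:R*sigma*a*b^+4*c*x*y - 16%:R*sigma*a*b^+5*x*z + 32%:R*sigma*a^+2*b*c^+3*z^+2 - 32%:R*sigma*a^+2*b*c^+3*x^+2 + 48%:R*sigma*a^+2*b^+2*c^+2*y*z + 16%:R*sigma*a^+2*b^+3*c*z^+2 + 16%:R*sigma*a^+2*b^+3*c*y^+2 - 32%:R*sigma*a^+2*b^+3*c*x^+2 + 16%:R*sigma*a^+2*b^+4*y*z - 16%:R*sigma*a^+3*b^+2*c*x*y + 16%:R*sigma*a^+3*b^+3*x*z + 32%:R*sigma*a^+4*b*c*z^+2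 - 32%:R*sigma*a^+4*b*c*x^+2 + 32%:R*sigma*a^+4*b^+2*y*z + 32%:R*sigma*a^+5*b*x*z - 32%:R*sigma^+2*b*c^+4*x*y + 16%:R*sigma^+2*b^+2*c^+3*x*z - 48%:R*sigma^+2*b^+3*c^+2*x*y + 16%:R*sigma^+2*b^+4*c*x*z - 16%:R*sigma^+2*b^+5*x*y + 16%:R*sigma^+2*a*c^+4*x^+2 - 32%:R*sigma^+2*a*b^+2*c^+2*z^+2 - 48%:R*sigma^+2*a*b^+2*c^+2*y^+2 - 16%:R*sigma^+2*a*b^+2*c^+2*x^+2 + 32%:R*sigma^+2*a*b^+3*c*y*z - 48%:R*sigma^+2*a*b^+4*z^+2 - 32%:R*sigma^+2*a*b^+4*y^+2 - 32%:R*sigma^+2*a*b^+4*x^+2 - 32%:R*sigma^+2*a^+2*c^+3*x*z - 64%:R*sigma^+2*a^+2*b*c^+2*x*y + 16%:R*sigma^+2*a^+2*b^+2*c*x*z - 16%:R*sigma^+2*a^+2*b^+3*x*y + 16%:R*sigma^+2*a^+3*c^+2*z^+2 + 16%:R*sigma^+2*a^+3*c^+2*x^+2 - 32%:R*sigma^+2*a^+3*b^+2*z^+2 - 48%:R*sigma^+2*a^+3*b^+2*y^+2 - 16%:R*sigma^+2*a^+3*b^+2*x^+2 - 32%:R*sigma^+2*a^+4*c*x*z - 32%:R*sigma^+2*a^+4*b*x*y + 16%:R*sigma^+2*a^+5*z^+2 + 16%:R*sigma^+3*c^+4*y*z + 16%:R*sigma^+3*b*c^+3*z^+2 - 16%:R*sigma^+3*b*c^+3*y^+2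 + 32%:R*sigma^+3*b*c^+3*x^+2 + 80%:R*sigma^+3*b^+2*c^+2*y*z + 32%:R*sigma^+3*b^+3*c*x^+2 + 32%:R*sigma^+3*b^+4*y*z + 48%:R*sigma^+3*a*c^+3*x*y + 16%:R*sigma^+3*a*b*c^+2*x*z + 96%:R*sigma^+3*a*b^+2*c*x*y - 32%:R*sigma^+3*a*b^+3*x*z - 16%:R*sigma^+3*a^+2*c^+2*y*z - 16%:R*sigma^+3*a^+2*b*c*z^+2 - 16%:R*sigma^+3*a^+2*b*c*y^+2 + 64%:R*sigma^+3*a^+2*b*c*x^+2 - 16%:R*sigma^+3*a^+2*b^+2*y*z + 48%:R*sigma^+3*a^+3*c*x*y - 48%:R*sigma^+3*a^+3*b*x*z - 32%:R*sigma^+3*a^+4*y*z - 48%:R*sigma^+4*c^+3*x*z - 16%:R*sigma^+4*b*c^+2*x*y + 32%:R*sigma^+4*b^+2*c*x*z + 64%:R*sigma^+4*b^+3*x*y + 48%:R*sigma^+4*a*c^+2*z^+2 + 32%:R*sigma^+4*a*c^+2*y^+2 - 48%:R*sigma^+4*a*c^+2*x^+2 - 16%:R*sigma^+4*a*b^+2*y^+2 + 32%:R*sigma^+4*a*b^+2*x^+2 + 48%:R*sigma^+4*a^+2*c*x*z - 16%:R*sigma^+4*a^+2*b*x*y + 32%:R*sigma^+4*a^+3*y^+2 - 16%:R*sigma^+5*c^+2*y*z - 48%:R*sigma^+5*b*c*z^+2 - 16%:R*sigma^+5*b*c*y^+2 - 32%:R*sigma^+5*b*c*x^+2 - 48%:R*sigma^+5*b^+2*y*z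 - 16%:R*sigma^+5*a*c*x*y - 16%:R*sigma^+5*a*b*x*z + 16%:R*sigma^+6*c*x*z - 48%:R*sigma^+6*b*x*y - 16%:R*sigma^+6*a*z^+2 + 32%:R*sigma^+6*a*y^+2 + 32%:R*sigma^+7*y*z).
Proof. by move=> -> -> -> -> -> -> -> -> -> ->; ring. Qed.

Lemma poly4 (R : comNzRingType) (sigma a b c x y z e00 e01 e02 e10 e11 e12 e20 e21 e22 tau : R) :
  e00 = (2%:R*a*c*y - 2%:R*a*b*z + 2%:R*sigma*c*z + 2%:R*sigma*b*y) -> e01 = (1%:R*c^+2*z + 2%:R*b*c*y - 1%:R*b^+2*z + 1%:R*a^+2*z - 2%:R*sigma*a*y - 1%:R*sigma^+2*z) -> e02 = (1%:R*c^+2*y - 2%:R*b*c*z - 1%:R*b^+2*y - 1%:R*a^+2*y - 2%:R*sigma*a*z + 1%:R*sigma^+2*y) -> e10 = (0 - 1%:R*c^+2*z - 1%:R*b^+2*z - 2%:R*a*c*x + 1%:R*a^+2*z - 2%:R*sigma*b*x + 1%:R*sigma^+2*z) -> e11 = (0 - 2%:R*b*c*x + 2%:R*a*b*z + 2%:R*sigma*c*z + 2%:R*sigma*a*x) -> e12 = (0 - 1%:R*c^+2*x + 1%:R*b^+2*x + 2%:R*a*c*z + 1%:R*a^+2*x - 2%:R*sigma*b*z - 1%:R*sigma^+2*x) -> e20 = (1%:R*c^+2*y + 1%:R*b^+2*y + 2%:R*a*b*x - 1%:R*a^+2*y - 2%:R*sigma*c*x - 1%:R*sigma^+2*y) ->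 e21 = (0 - 1%:R*c^+2*x + 1%:R*b^+2*x - 2%:R*a*b*y - 1%:R*a^+2*x - 2%:R*sigma*c*y + 1%:R*sigma^+2*x) -> e22 = (2%:R*b*c*x - 2%:R*a*c*y + 2%:R*sigma*b*y + 2%:R*sigma*a*x) -> tau = (1%:R - 1%:R*c^+2 - 1%:R*b^+2 - 1%:R*a^+2 + 3%:R*sigma^+2) ->
  ((e12 - e21) * e22 * e01 + (e20 - e02) * e11 * e22 - (e01 - e10) * (e11 * e21 - e12 * e00 + e10 * e02 + e20 * e01)) * tau + 2%:R * (e20 - e02) * (e01 - e10) ^+ 2 =
  (sigma^+2 + (a*a+b*b+c*c) - 1) * (0 - 12%:R*b*c^+5*z^+3 + 4%:R*b*c^+5*y^+2*z + 4%:R*b*c^+5*x^+2*z - 44%:R*b^+2*c^+4*y*z^+2 + 4%:R*b^+2*c^+4*y^+3 + 4%:R*b^+2*c^+4*x^+2*y + 4%:R*b^+3*c^+3*z^+3 - 44%:R*b^+3*c^+3*y^+2*z + 4%:R*b^+3*c^+3*x^+2*z + 4%:R*b^+4*c^+2*y*z^+2 - 12%:R*b^+4*c^+2*y^+3 + 4%:R*b^+4*c^+2*x^+2*y - 44%:R*a*b*c^+4*x*z^+2 + 4%:R*a*b*c^+4*x*y^+2 + 4%:R*a*b*c^+4*x^+3 - 96%:R*a*b^+2*c^+3*x*y*z + 4%:R*a*b^+3*c^+2*x*z^+2 - 44%:R*a*b^+3*c^+2*x*y^+2 + 4%:R*a*b^+3*c^+2*x^+3 + 4%:R*a^+2*b*c^+3*z^+3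 + 4%:R*a^+2*b*c^+3*y^+2*z - 44%:R*a^+2*b*c^+3*x^+2*z + 4%:R*a^+2*b^+2*c^+2*y*z^+2 + 4%:R*a^+2*b^+2*c^+2*y^+3 - 44%:R*a^+2*b^+2*c^+2*x^+2*y + 4%:R*a^+3*b*c^+2*x*z^+2 + 4%:R*a^+3*b*c^+2*x*y^+2 - 12%:R*a^+3*b*c^+2*x^+3 + 12%:R*sigma*c^+5*x*z^+2 + 24%:R*sigma*b*c^+4*x*y*z - 20%:R*sigma*b^+2*c^+3*x*z^+2 + 12%:R*sigma*b^+2*c^+3*x*y^+2 - 4%:R*sigma*b^+2*c^+3*x^+3 - 40%:R*sigma*b^+3*c^+2*x*y*z - 20%:R*sigma*b^+4*c*x*y^+2 - 4%:R*sigma*b^+4*c*x^+3 - 20%:R*sigma*a*c^+4*z^+3 + 24%:R*sigma*a*c^+4*x^+2*z - 24%:R*sigma*a*b*c^+3*y*z^+2 + 32%:R*sigma*a*b*c^+3*x^+2*y - 4%:R*sigma*a*b^+2*c^+2*z^+3 + 12%:R*sigma*a*b^+2*c^+2*y^+2*z - 36%:R*sigma*a*b^+2*c^+2*x^+2*z - 8%:R*sigma*a*b^+3*c*y*z^+2 + 16%:R*sigma*a*b^+3*c*y^+3 - 32%:R*sigma*a*b^+3*c*x^+2*y - 4%:R*sigma*a*b^+4*y^+2*z + 4%:R*sigma*a*b^+4*x^+2*z - 44%:R*sigma*a^+2*c^+3*x*z^+2 - 4%:R*sigma*a^+2*c^+3*x*y^+2 + 12%:R*sigma*a^+2*c^+3*x^+3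 - 24%:R*sigma*a^+2*b*c^+2*x*y*z - 8%:R*sigma*a^+2*b^+2*c*x*z^+2 + 24%:R*sigma*a^+2*b^+2*c*x*y^+2 - 24%:R*sigma*a^+2*b^+2*c*x^+3 - 16%:R*sigma*a^+2*b^+3*x*y*z - 4%:R*sigma*a^+3*c^+2*z^+3 + 4%:R*sigma*a^+3*c^+2*y^+2*z - 28%:R*sigma*a^+3*c^+2*x^+2*z - 8%:R*sigma*a^+3*b*c*y*z^+2 + 16%:R*sigma*a^+3*b*c*x^+2*y - 8%:R*sigma*a^+4*c*x*z^+2 - 4%:R*sigma*a^+4*c*x*y^+2 - 4%:R*sigma*a^+4*c*x^+3 - 16%:R*sigma*a^+4*b*x*y*z + 4%:R*sigma*a^+5*y^+2*z - 4%:R*sigma*a^+5*x^+2*z + 4%:R*sigma^+2*c^+4*y*z^+2 + 32%:R*sigma^+2*b*c^+3*z^+3 + 8%:R*sigma^+2*b*c^+3*y^+2*z + 32%:R*sigma^+2*b*c^+3*x^+2*z + 68%:R*sigma^+2*b^+2*c^+2*y*z^+2 + 4%:R*sigma^+2*b^+2*c^+2*y^+3 + 20%:R*sigma^+2*b^+2*c^+2*x^+2*y - 4%:R*sigma^+2*b^+3*c*z^+3 + 36%:R*sigma^+2*b^+3*c*y^+2*z - 4%:R*sigma^+2*b^+3*c*x^+2*z - 4%:R*sigma^+2*b^+4*y*z^+2 - 16%:R*sigma^+2*b^+4*x^+2*y - 24%:R*sigma^+2*a*c^+3*x*y*z + 24%:R*sigma^+2*a*b*c^+2*x*z^+2 -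 8%:R*sigma^+2*a*b*c^+2*x*y^+2 + 24%:R*sigma^+2*a*b*c^+2*x^+3 + 40%:R*sigma^+2*a*b^+2*c*x*y*z - 12%:R*sigma^+2*a*b^+3*x*z^+2 + 20%:R*sigma^+2*a*b^+3*x*y^+2 - 12%:R*sigma^+2*a*b^+3*x^+3 + 44%:R*sigma^+2*a^+2*c^+2*y*z^+2 - 4%:R*sigma^+2*a^+2*c^+2*y^+3 - 20%:R*sigma^+2*a^+2*c^+2*x^+2*y - 4%:R*sigma^+2*a^+2*b*c*z^+3 + 36%:R*sigma^+2*a^+2*b*c*y^+2*z - 4%:R*sigma^+2*a^+2*b*c*x^+2*z + 4%:R*sigma^+2*a^+2*b^+2*y*z^+2 - 4%:R*sigma^+2*a^+2*b^+2*y^+3 - 4%:R*sigma^+2*a^+2*b^+2*x^+2*y + 40%:R*sigma^+2*a^+3*c*x*y*z - 12%:R*sigma^+2*a^+3*b*x*z^+2 + 20%:R*sigma^+2*a^+3*b*x*y^+2 - 12%:R*sigma^+2*a^+3*b*x^+3 + 8%:R*sigma^+2*a^+4*y*z^+2 - 4%:R*sigma^+2*a^+4*y^+3 + 12%:R*sigma^+2*a^+4*x^+2*y - 16%:R*sigma^+3*c^+3*x*z^+2 + 24%:R*sigma^+3*b*c^+2*x*y*z + 20%:R*sigma^+3*b^+2*c*x*z^+2 + 28%:R*sigma^+3*b^+2*c*x*y^+2 + 12%:R*sigma^+3*b^+2*c*x^+3 + 32%:R*sigma^+3*b^+3*x*y*z + 32%:R*sigma^+3*a*c^+2*z^+3 -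 24%:R*sigma^+3*a*c^+2*y^+2*z + 8%:R*sigma^+3*a*b*c*y*z^+2 - 16%:R*sigma^+3*a*b*c*y^+3 + 16%:R*sigma^+3*a*b*c*x^+2*y + 4%:R*sigma^+3*a*b^+2*z^+3 - 28%:R*sigma^+3*a*b^+2*y^+2*z + 12%:R*sigma^+3*a*b^+2*x^+2*z + 28%:R*sigma^+3*a^+2*c*x*z^+2 - 4%:R*sigma^+3*a^+2*c*x*y^+2 + 12%:R*sigma^+3*a^+2*c*x^+3 + 16%:R*sigma^+3*a^+2*b*x*y*z + 4%:R*sigma^+3*a^+3*z^+3 - 20%:R*sigma^+3*a^+3*y^+2*z + 4%:R*sigma^+3*a^+3*x^+2*z - 16%:R*sigma^+4*c^+2*y*z^+2 - 20%:R*sigma^+4*b*c*z^+3 - 12%:R*sigma^+4*b*c*y^+2*z - 20%:R*sigma^+4*b*c*x^+2*z - 24%:R*sigma^+4*b^+2*y*z^+2 + 16%:R*sigma^+4*b^+2*x^+2*y + 8%:R*sigma^+4*a*c*x*y*z + 4%:R*sigma^+4*a*b*x*z^+2 - 28%:R*sigma^+4*a*b*x*y^+2 + 4%:R*sigma^+4*a*b*x^+3 - 28%:R*sigma^+4*a^+2*y*z^+2 + 12%:R*sigma^+4*a^+2*y^+3 - 4%:R*sigma^+4*a^+2*x^+2*y + 4%:R*sigma^+5*c*x*z^+2 - 32%:R*sigma^+5*b*x*y*z - 12%:R*sigma^+5*a*z^+3 + 24%:R*sigma^+5*a*y^+2*z - 8%:R*sigma^+5*a*x^+2*z + 12%:R*sigma^+6*y*z^+2)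 + (a*x+b*y+c*z) * (16%:R*b*c^+6*z^+2 + 32%:R*b^+2*c^+5*y*z + 16%:R*b^+3*c^+4*z^+2 + 16%:R*b^+3*c^+4*y^+2 + 32%:R*b^+4*c^+3*y*z + 16%:R*b^+5*c^+2*y^+2 + 32%:R*a*b*c^+5*x*z + 32%:R*a*b^+2*c^+4*x*y + 32%:R*a*b^+3*c^+3*x*z + 32%:R*a*b^+4*c^+2*x*y + 16%:R*a^+2*b*c^+4*z^+2 + 16%:R*a^+2*b*c^+4*x^+2 + 32%:R*a^+2*b^+2*c^+3*y*z + 16%:R*a^+2*b^+3*c^+2*y^+2 + 16%:R*a^+2*b^+3*c^+2*x^+2 + 32%:R*a^+3*b*c^+3*x*z + 32%:R*a^+3*b^+2*c^+2*x*y + 16%:R*a^+4*b*c^+2*x^+2 - 16%:R*sigma*c^+6*x*z - 16%:R*sigma*b*c^+5*x*y + 16%:R*sigma*b^+2*c^+4*x*z + 16%:R*sigma*b^+3*c^+3*x*y + 32%:R*sigma*b^+4*c^+2*x*z + 32%:R*sigma*b^+5*c*x*y + 16%:R*sigma*a*c^+5*z^+2 - 16%:R*sigma*a*c^+5*x^+2 - 16%:R*sigma*a*b*c^+4*y*z + 16%:R*sigma*a*b^+2*c^+3*z^+2 - 32%:R*sigma*a*b^+2*c^+3*y^+2 + 16%:R*sigma*a*b^+2*c^+3*x^+2 - 16%:R*sigma*a*b^+3*c^+2*y*z - 32%:R*sigma*a*b^+4*c*y^+2 + 32%:R*sigma*a*b^+4*c*x^+2 - 48%:R*sigma*a^+2*b*c^+3*x*y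 + 48%:R*sigma*a^+2*b^+2*c^+2*x*z + 16%:R*sigma*a^+3*c^+3*z^+2 - 16%:R*sigma*a^+3*c^+3*x^+2 - 16%:R*sigma*a^+3*b*c^+2*y*z - 32%:R*sigma*a^+3*b^+2*c*y^+2 + 32%:R*sigma*a^+3*b^+2*c*x^+2 + 16%:R*sigma*a^+4*c^+2*x*z - 32%:R*sigma*a^+4*b*c*x*y - 16%:R*sigma^+2*c^+5*y*z - 32%:R*sigma^+2*b*c^+4*z^+2 - 32%:R*sigma^+2*b*c^+4*y^+2 - 48%:R*sigma^+2*b*c^+4*x^+2 - 16%:R*sigma^+2*b^+2*c^+3*y*z - 48%:R*sigma^+2*b^+3*c^+2*z^+2 - 16%:R*sigma^+2*b^+3*c^+2*y^+2 - 32%:R*sigma^+2*b^+3*c^+2*x^+2 - 32%:R*sigma^+2*b^+4*c*y*z + 16%:R*sigma^+2*b^+5*x^+2 + 16%:R*sigma^+2*a*c^+4*x*y + 32%:R*sigma^+2*a*b*c^+3*x*z + 16%:R*sigma^+2*a*b^+2*c^+2*x*y - 32%:R*sigma^+2*a*b^+4*x*y - 48%:R*sigma^+2*a^+2*c^+3*y*z - 48%:R*sigma^+2*a^+2*b*c^+2*z^+2 - 16%:R*sigma^+2*a^+2*b*c^+2*y^+2 - 32%:R*sigma^+2*a^+2*b*c^+2*x^+2 - 64%:R*sigma^+2*a^+2*b^+2*c*y*z + 16%:R*sigma^+2*a^+2*b^+3*y^+2 + 16%:R*sigma^+2*a^+2*b^+3*x^+2 + 16%:R*sigma^+2*a^+3*c^+2*x*y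 - 32%:R*sigma^+2*a^+3*b^+2*x*y - 32%:R*sigma^+2*a^+4*c*y*z + 16%:R*sigma^+2*a^+4*b*y^+2 + 32%:R*sigma^+3*c^+4*x*z - 32%:R*sigma^+3*b*c^+3*x*y - 16%:R*sigma^+3*b^+2*c^+2*x*z - 48%:R*sigma^+3*b^+3*c*x*y - 32%:R*sigma^+3*b^+4*x*z + 32%:R*sigma^+3*a*c^+3*y^+2 + 96%:R*sigma^+3*a*b*c^+2*y*z - 16%:R*sigma^+3*a*b^+2*c*z^+2 + 64%:R*sigma^+3*a*b^+2*c*y^+2 - 16%:R*sigma^+3*a*b^+2*c*x^+2 + 48%:R*sigma^+3*a*b^+3*y*z + 80%:R*sigma^+3*a^+2*c^+2*x*z + 16%:R*sigma^+3*a^+2*b*c*x*y - 16%:R*sigma^+3*a^+2*b^+2*x*z - 16%:R*sigma^+3*a^+3*c*z^+2 + 32%:R*sigma^+3*a^+3*c*y^+2 + 16%:R*sigma^+3*a^+3*c*x^+2 + 48%:R*sigma^+3*a^+3*b*y*z + 16%:R*sigma^+3*a^+4*x*z + 64%:R*sigma^+4*c^+3*y*z - 16%:R*sigma^+4*b*c^+2*z^+2 + 32%:R*sigma^+4*b*c^+2*y^+2 - 16%:R*sigma^+4*b^+2*c*y*z + 32%:R*sigma^+4*b^+3*z^+2 + 32%:R*sigma^+4*a*c^+2*x*y + 48%:R*sigma^+4*a*b^+2*x*y - 16%:R*sigma^+4*a^+2*c*y*z + 32%:R*sigma^+4*a^+2*b*z^+2 - 48%:R*sigma^+4*a^+2*b*y^+2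 + 48%:R*sigma^+4*a^+2*b*x^+2 - 48%:R*sigma^+4*a^+3*x*y - 48%:R*sigma^+5*c^+2*x*z - 16%:R*sigma^+5*b*c*x*y - 16%:R*sigma^+5*a*c*z^+2 - 32%:R*sigma^+5*a*c*y^+2 - 48%:R*sigma^+5*a*c*x^+2 - 16%:R*sigma^+5*a*b*y*z - 16%:R*sigma^+5*a^+2*x*z - 48%:R*sigma^+6*c*y*z + 32%:R*sigma^+6*b*z^+2 - 16%:R*sigma^+6*b*x^+2 + 16%:R*sigma^+6*a*x*y + 32%:R*sigma^+7*x*z).
Proof. by move=> -> -> -> -> -> -> -> -> -> ->; ring. Qed.

Lemma poly5 (R : comNzRingType) (sigma a b c x y z e00 e01 e02 e10 e11 e12 e20 e21 e22 tau : R) :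
  e00 = (2%:R*a*c*y - 2%:R*a*b*z + 2%:R*sigma*c*z + 2%:R*sigma*b*y) -> e01 = (1%:R*c^+2*z + 2%:R*b*c*y - 1%:R*b^+2*z + 1%:R*a^+2*z - 2%:R*sigma*a*y - 1%:R*sigma^+2*z) -> e02 = (1%:R*c^+2*y - 2%:R*b*c*z - 1%:R*b^+2*y - 1%:R*a^+2*y - 2%:R*sigma*a*z + 1%:R*sigma^+2*y) -> e10 = (0 - 1%:R*c^+2*z - 1%:R*b^+2*z - 2%:R*a*c*x + 1%:R*a^+2*z - 2%:R*sigma*b*x + 1%:R*sigma^+2*z) -> e11 = (0 - 2%:R*b*c*x + 2%:R*a*b*z + 2%:R*sigma*c*z + 2%:R*sigma*a*x) -> e12 = (0 - 1%:R*c^+2*x + 1%:R*b^+2*x + 2%:R*a*c*z + 1%:R*a^+2*x - 2%:R*sigma*b*z - 1%:R*sigma^+2*x) -> e20 = (1%:R*c^+2*y + 1%:R*b^+2*y + 2%:R*a*b*x - 1%:R*a^+2*y - 2%:R*sigma*c*x - 1%:R*sigma^+2*y) -> e21 = (0 - 1%:R*c^+2*x + 1%:R*b^+2*x - 2%:R*a*b*y - 1%:R*a^+2*x - 2%:R*sigma*c*y + 1%:R*sigma^+2*x) -> e22 = (2%:R*b*c*x - 2%:R*a*c*y + 2%:R*sigma*b*y + 2%:R*sigma*a*x) -> tau = (1%:R - 1%:R*c^+2 - 1%:R*b^+2 - 1%:R*a^+2 + 3%:R*sigma^+2) ->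
  ((e02 - e20) * e22 * e10 + (e21 - e12) * e00 * e22 - (e10 - e01) * (e00 * e20 - e02 * e11 + e01 * e12 + e21 * e10)) * tau + 2%:R * (e21 - e12) * (e10 - e01) ^+ 2 =
  (sigma^+2 + (a*a+b*b+c*c) - 1) * (12%:R*a*c^+5*z^+3 - 4%:R*a*c^+5*y^+2*z - 4%:R*a*c^+5*x^+2*z + 44%:R*a*b*c^+4*y*z^+2 - 4%:R*a*b*c^+4*y^+3 - 4%:R*a*b*c^+4*x^+2*y - 4%:R*a*b^+2*c^+3*z^+3 + 44%:R*a*b^+2*c^+3*y^+2*z - 4%:R*a*b^+2*c^+3*x^+2*z - 4%:R*a*b^+3*c^+2*y*z^+2 + 12%:R*a*b^+3*c^+2*y^+3 - 4%:R*a*b^+3*c^+2*x^+2*y + 44%:R*a^+2*c^+4*x*z^+2 - 4%:R*a^+2*c^+4*x*y^+2 - 4%:R*a^+2*c^+4*x^+3 + 96%:R*a^+2*b*c^+3*x*y*z - 4%:R*a^+2*b^+2*c^+2*x*z^+2 + 44%:R*a^+2*b^+2*c^+2*x*y^+2 - 4%:R*a^+2*b^+2*c^+2*x^+3 - 4%:R*a^+3*c^+3*z^+3 - 4%:R*a^+3*c^+3*y^+2*z + 44%:R*a^+3*c^+3*x^+2*z - 4%:R*a^+3*b*c^+2*y*z^+2 - 4%:R*a^+3*b*c^+2*y^+3 + 44%:R*a^+3*b*c^+2*x^+2*y - 4%:R*a^+4*c^+2*x*z^+2 - 4%:R*a^+4*c^+2*x*y^+2 + 12%:R*a^+4*c^+2*x^+3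 + 12%:R*sigma*c^+5*y*z^+2 - 20%:R*sigma*b*c^+4*z^+3 + 24%:R*sigma*b*c^+4*y^+2*z - 44%:R*sigma*b^+2*c^+3*y*z^+2 + 12%:R*sigma*b^+2*c^+3*y^+3 - 4%:R*sigma*b^+2*c^+3*x^+2*y - 4%:R*sigma*b^+3*c^+2*z^+3 - 28%:R*sigma*b^+3*c^+2*y^+2*z + 4%:R*sigma*b^+3*c^+2*x^+2*z - 8%:R*sigma*b^+4*c*y*z^+2 - 4%:R*sigma*b^+4*c*y^+3 - 4%:R*sigma*b^+4*c*x^+2*y - 4%:R*sigma*b^+5*y^+2*z + 4%:R*sigma*b^+5*x^+2*z + 24%:R*sigma*a*c^+4*x*y*z - 24%:R*sigma*a*b*c^+3*x*z^+2 + 32%:R*sigma*a*b*c^+3*x*y^+2 - 24%:R*sigma*a*b^+2*c^+2*x*y*z - 8%:R*sigma*a*b^+3*c*x*z^+2 + 16%:R*sigma*a*b^+3*c*x*y^+2 - 16%:R*sigma*a*b^+4*x*y*z - 20%:R*sigma*a^+2*c^+3*y*z^+2 - 4%:R*sigma*a^+2*c^+3*y^+3 + 12%:R*sigma*a^+2*c^+3*x^+2*y - 4%:R*sigma*a^+2*b*c^+2*z^+3 - 36%:R*sigma*a^+2*b*c^+2*y^+2*z + 12%:R*sigma*a^+2*b*c^+2*x^+2*z - 8%:R*sigma*a^+2*b^+2*c*y*z^+2 - 24%:R*sigma*a^+2*b^+2*c*y^+3 + 24%:R*sigma*a^+2*b^+2*c*x^+2*y - 40%:R*sigma*a^+3*c^+2*x*y*z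 - 8%:R*sigma*a^+3*b*c*x*z^+2 - 32%:R*sigma*a^+3*b*c*x*y^+2 + 16%:R*sigma*a^+3*b*c*x^+3 - 16%:R*sigma*a^+3*b^+2*x*y*z - 4%:R*sigma*a^+4*c*y^+3 - 20%:R*sigma*a^+4*c*x^+2*y + 4%:R*sigma*a^+4*b*y^+2*z - 4%:R*sigma*a^+4*b*x^+2*z - 4%:R*sigma^+2*c^+4*x*z^+2 + 24%:R*sigma^+2*b*c^+3*x*y*z - 44%:R*sigma^+2*b^+2*c^+2*x*z^+2 + 20%:R*sigma^+2*b^+2*c^+2*x*y^+2 + 4%:R*sigma^+2*b^+2*c^+2*x^+3 - 40%:R*sigma^+2*b^+3*c*x*y*z - 8%:R*sigma^+2*b^+4*x*z^+2 - 12%:R*sigma^+2*b^+4*x*y^+2 + 4%:R*sigma^+2*b^+4*x^+3 - 32%:R*sigma^+2*a*c^+3*z^+3 - 32%:R*sigma^+2*a*c^+3*y^+2*z - 8%:R*sigma^+2*a*c^+3*x^+2*z - 24%:R*sigma^+2*a*b*c^+2*y*z^+2 - 24%:R*sigma^+2*a*b*c^+2*y^+3 + 8%:R*sigma^+2*a*b*c^+2*x^+2*y + 4%:R*sigma^+2*a*b^+2*c*z^+3 + 4%:R*sigma^+2*a*b^+2*c*y^+2*z - 36%:R*sigma^+2*a*b^+2*c*x^+2*z + 12%:R*sigma^+2*a*b^+3*y*z^+2 + 12%:R*sigma^+2*a*b^+3*y^+3 - 20%:R*sigma^+2*a*b^+3*x^+2*y - 68%:R*sigma^+2*a^+2*c^+2*x*z^+2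 - 20%:R*sigma^+2*a^+2*c^+2*x*y^+2 - 4%:R*sigma^+2*a^+2*c^+2*x^+3 - 40%:R*sigma^+2*a^+2*b*c*x*y*z - 4%:R*sigma^+2*a^+2*b^+2*x*z^+2 + 4%:R*sigma^+2*a^+2*b^+2*x*y^+2 + 4%:R*sigma^+2*a^+2*b^+2*x^+3 + 4%:R*sigma^+2*a^+3*c*z^+3 + 4%:R*sigma^+2*a^+3*c*y^+2*z - 36%:R*sigma^+2*a^+3*c*x^+2*z + 12%:R*sigma^+2*a^+3*b*y*z^+2 + 12%:R*sigma^+2*a^+3*b*y^+3 - 20%:R*sigma^+2*a^+3*b*x^+2*y + 4%:R*sigma^+2*a^+4*x*z^+2 + 16%:R*sigma^+2*a^+4*x*y^+2 - 16%:R*sigma^+3*c^+3*y*z^+2 + 32%:R*sigma^+3*b*c^+2*z^+3 - 24%:R*sigma^+3*b*c^+2*x^+2*z + 28%:R*sigma^+3*b^+2*c*y*z^+2 + 12%:R*sigma^+3*b^+2*c*y^+3 - 4%:R*sigma^+3*b^+2*c*x^+2*y + 4%:R*sigma^+3*b^+3*z^+3 + 4%:R*sigma^+3*b^+3*y^+2*z - 20%:R*sigma^+3*b^+3*x^+2*z + 24%:R*sigma^+3*a*c^+2*x*y*z + 8%:R*sigma^+3*a*b*c*x*z^+2 + 16%:R*sigma^+3*a*b*c*x*y^+2 - 16%:R*sigma^+3*a*b*c*x^+3 + 16%:R*sigma^+3*a*b^+2*x*y*z + 20%:R*sigma^+3*a^+2*c*y*z^+2 + 12%:R*sigma^+3*a^+2*c*y^+3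 + 28%:R*sigma^+3*a^+2*c*x^+2*y + 4%:R*sigma^+3*a^+2*b*z^+3 + 12%:R*sigma^+3*a^+2*b*y^+2*z - 28%:R*sigma^+3*a^+2*b*x^+2*z + 32%:R*sigma^+3*a^+3*x*y*z + 16%:R*sigma^+4*c^+2*x*z^+2 - 8%:R*sigma^+4*b*c*x*y*z + 28%:R*sigma^+4*b^+2*x*z^+2 + 4%:R*sigma^+4*b^+2*x*y^+2 - 12%:R*sigma^+4*b^+2*x^+3 + 20%:R*sigma^+4*a*c*z^+3 + 20%:R*sigma^+4*a*c*y^+2*z + 12%:R*sigma^+4*a*c*x^+2*z - 4%:R*sigma^+4*a*b*y*z^+2 - 4%:R*sigma^+4*a*b*y^+3 + 28%:R*sigma^+4*a*b*x^+2*y + 24%:R*sigma^+4*a^+2*x*z^+2 - 16%:R*sigma^+4*a^+2*x*y^+2 + 4%:R*sigma^+5*c*y*z^+2 - 12%:R*sigma^+5*b*z^+3 - 8%:R*sigma^+5*b*y^+2*z + 24%:R*sigma^+5*b*x^+2*z - 32%:R*sigma^+5*a*x*y*z - 12%:R*sigma^+6*x*z^+2) + (a*x+b*y+c*z) * (0 - 16%:R*a*c^+6*z^+2 - 32%:R*a*b*c^+5*y*z - 16%:R*a*b^+2*c^+4*z^+2 - 16%:R*a*b^+2*c^+4*y^+2 - 32%:R*a*b^+3*c^+3*y*z - 16%:R*a*b^+4*c^+2*y^+2 - 32%:R*a^+2*c^+5*x*z - 32%:R*a^+2*b*c^+4*x*y - 32%:R*a^+2*b^+2*c^+3*x*z -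 32%:R*a^+2*b^+3*c^+2*x*y - 16%:R*a^+3*c^+4*z^+2 - 16%:R*a^+3*c^+4*x^+2 - 32%:R*a^+3*b*c^+3*y*z - 16%:R*a^+3*b^+2*c^+2*y^+2 - 16%:R*a^+3*b^+2*c^+2*x^+2 - 32%:R*a^+4*c^+3*x*z - 32%:R*a^+4*b*c^+2*x*y - 16%:R*a^+5*c^+2*x^+2 - 16%:R*sigma*c^+6*y*z + 16%:R*sigma*b*c^+5*z^+2 - 16%:R*sigma*b*c^+5*y^+2 + 16%:R*sigma*b^+3*c^+3*z^+2 - 16%:R*sigma*b^+3*c^+3*y^+2 + 16%:R*sigma*b^+4*c^+2*y*z - 16%:R*sigma*a*c^+5*x*y - 16%:R*sigma*a*b*c^+4*x*z - 48%:R*sigma*a*b^+2*c^+3*x*y - 16%:R*sigma*a*b^+3*c^+2*x*z - 32%:R*sigma*a*b^+4*c*x*y + 16%:R*sigma*a^+2*c^+4*y*z + 16%:R*sigma*a^+2*b*c^+3*z^+2 + 16%:R*sigma*a^+2*b*c^+3*y^+2 - 32%:R*sigma*a^+2*b*c^+3*x^+2 + 48%:R*sigma*a^+2*b^+2*c^+2*y*z + 32%:R*sigma*a^+2*b^+3*c*y^+2 - 32%:R*sigma*a^+2*b^+3*c*x^+2 + 16%:R*sigma*a^+3*c^+3*x*y - 16%:R*sigma*a^+3*b*c^+2*x*z + 32%:R*sigma*a^+4*c^+2*y*z + 32%:R*sigma*a^+4*b*c*y^+2 - 32%:R*sigma*a^+4*b*c*x^+2 + 32%:R*sigma*a^+5*c*x*y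 + 16%:R*sigma^+2*c^+5*x*z - 16%:R*sigma^+2*b*c^+4*x*y + 48%:R*sigma^+2*b^+2*c^+3*x*z - 16%:R*sigma^+2*b^+3*c^+2*x*y + 32%:R*sigma^+2*b^+4*c*x*z + 32%:R*sigma^+2*a*c^+4*z^+2 + 48%:R*sigma^+2*a*c^+4*y^+2 + 32%:R*sigma^+2*a*c^+4*x^+2 - 32%:R*sigma^+2*a*b*c^+3*y*z + 48%:R*sigma^+2*a*b^+2*c^+2*z^+2 + 32%:R*sigma^+2*a*b^+2*c^+2*y^+2 + 16%:R*sigma^+2*a*b^+2*c^+2*x^+2 - 16%:R*sigma^+2*a*b^+4*x^+2 + 16%:R*sigma^+2*a^+2*c^+3*x*z - 16%:R*sigma^+2*a^+2*b*c^+2*x*y + 64%:R*sigma^+2*a^+2*b^+2*c*x*z + 32%:R*sigma^+2*a^+2*b^+3*x*y + 48%:R*sigma^+2*a^+3*c^+2*z^+2 + 32%:R*sigma^+2*a^+3*c^+2*y^+2 + 16%:R*sigma^+2*a^+3*c^+2*x^+2 - 16%:R*sigma^+2*a^+3*b^+2*y^+2 - 16%:R*sigma^+2*a^+3*b^+2*x^+2 + 32%:R*sigma^+2*a^+4*c*x*z + 32%:R*sigma^+2*a^+4*b*x*y - 16%:R*sigma^+2*a^+5*y^+2 + 32%:R*sigma^+3*c^+4*y*z + 32%:R*sigma^+3*b*c^+3*x^+2 + 80%:R*sigma^+3*b^+2*c^+2*y*z - 16%:R*sigma^+3*b^+3*c*z^+2 + 16%:R*sigma^+3*b^+3*c*y^+2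 + 32%:R*sigma^+3*b^+3*c*x^+2 + 16%:R*sigma^+3*b^+4*y*z - 32%:R*sigma^+3*a*c^+3*x*y + 96%:R*sigma^+3*a*b*c^+2*x*z + 16%:R*sigma^+3*a*b^+2*c*x*y + 48%:R*sigma^+3*a*b^+3*x*z - 16%:R*sigma^+3*a^+2*c^+2*y*z - 16%:R*sigma^+3*a^+2*b*c*z^+2 - 16%:R*sigma^+3*a^+2*b*c*y^+2 + 64%:R*sigma^+3*a^+2*b*c*x^+2 - 16%:R*sigma^+3*a^+2*b^+2*y*z - 48%:R*sigma^+3*a^+3*c*x*y + 48%:R*sigma^+3*a^+3*b*x*z - 32%:R*sigma^+3*a^+4*y*z - 64%:R*sigma^+4*c^+3*x*z - 32%:R*sigma^+4*b*c^+2*x*y + 16%:R*sigma^+4*b^+2*c*x*z + 48%:R*sigma^+4*b^+3*x*y + 16%:R*sigma^+4*a*c^+2*z^+2 - 32%:R*sigma^+4*a*c^+2*x^+2 - 32%:R*sigma^+4*a*b^+2*z^+2 - 48%:R*sigma^+4*a*b^+2*y^+2 + 48%:R*sigma^+4*a*b^+2*x^+2 + 16%:R*sigma^+4*a^+2*c*x*z - 48%:R*sigma^+4*a^+2*b*x*y - 32%:R*sigma^+4*a^+3*z^+2 - 48%:R*sigma^+5*c^+2*y*z - 16%:R*sigma^+5*b*c*z^+2 - 48%:R*sigma^+5*b*c*y^+2 - 32%:R*sigma^+5*b*c*x^+2 - 16%:R*sigma^+5*b^+2*y*z - 16%:R*sigma^+5*a*c*x*y - 16%:R*sigma^+5*a*b*x*z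 + 48%:R*sigma^+6*c*x*z - 16%:R*sigma^+6*b*x*y - 32%:R*sigma^+6*a*z^+2 + 16%:R*sigma^+6*a*y^+2 + 32%:R*sigma^+7*y*z).
Proof. by move=> -> -> -> -> -> -> -> -> -> ->; ring. Qed.

Lemma poly6 (R : comNzRingType) (sigma a b c x y z e00 e01 e02 e10 e11 e12 e20 e21 e22 tau : R) :
  e00 = (2%:R*a*c*y - 2%:R*a*b*z + 2%:R*sigma*c*z + 2%:R*sigma*b*y) -> e01 = (1%:R*c^+2*z + 2%:R*b*c*y - 1%:R*b^+2*z + 1%:R*a^+2*z - 2%:R*sigma*a*y - 1%:R*sigma^+2*z) -> e02 = (1%:R*c^+2*y - 2%:R*b*c*z - 1%:R*b^+2*y - 1%:R*a^+2*y - 2%:R*sigma*a*z + 1%:R*sigma^+2*y) -> e10 = (0 - 1%:R*c^+2*z - 1%:R*b^+2*z - 2%:R*a*c*x + 1%:R*a^+2*z - 2%:R*sigma*b*x + 1%:R*sigma^+2*z) -> e11 = (0 - 2%:R*b*c*x + 2%:R*a*b*z + 2%:R*sigma*c*z + 2%:R*sigma*a*x) -> e12 = (0 - 1%:R*c^+2*x + 1%:R*b^+2*x + 2%:R*a*c*z + 1%:R*a^+2*x - 2%:R*sigma*b*z - 1%:R*sigma^+2*x) -> e20 = (1%:R*c^+2*y + 1%:R*b^+2*y + 2%:R*a*b*x - 1%:R*a^+2*y - 2%:R*sigma*c*x - 1%:R*sigma^+2*y) -> e21 = (0 - 1%:R*c^+2*x + 1%:R*b^+2*x - 2%:R*a*b*y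 - 1%:R*a^+2*x - 2%:R*sigma*c*y + 1%:R*sigma^+2*x) -> e22 = (2%:R*b*c*x - 2%:R*a*c*y + 2%:R*sigma*b*y + 2%:R*sigma*a*x) -> tau = (1%:R - 1%:R*c^+2 - 1%:R*b^+2 - 1%:R*a^+2 + 3%:R*sigma^+2) ->
  ((e01 - e10) * (e12 - e21) * e20 + (e01 - e10) * (e20 - e02) * e21 + (e01 - e10) * e01 * e22 + (e12 - e21) * (e20 - e02) * e10 + (e12 - e21) * e00 * e12 + (e20 - e02) * e11 * e20) * tau + 2%:R * (e01 - e10) * (e12 - e21) * (e20 - e02) =
  (sigma^+2 + (a*a+b*b+c*c) - 1) * (0 - 12%:R*a*b*c^+4*z^+3 + 4%:R*a*b*c^+4*y^+2*z + 4%:R*a*b*c^+4*x^+2*z - 44%:R*a*b^+2*c^+3*y*z^+2 + 4%:R*a*b^+2*c^+3*y^+3 + 4%:R*a*b^+2*c^+3*x^+2*y + 4%:R*a*b^+3*c^+2*z^+3 - 44%:R*a*b^+3*c^+2*y^+2*z + 4%:R*a*b^+3*c^+2*x^+2*z + 4%:R*a*b^+4*c*y*z^+2 - 12%:R*a*b^+4*c*y^+3 + 4%:R*a*b^+4*c*x^+2*y - 44%:R*a^+2*b*c^+3*x*z^+2 + 4%:R*a^+2*b*c^+3*x*y^+2 + 4%:R*a^+2*b*c^+3*x^+3 - 96%:R*a^+2*b^+2*c^+2*x*y*z + 4%:R*a^+2*b^+3*c*x*z^+2 - 44%:R*a^+2*b^+3*c*x*y^+2 + 4%:R*a^+2*b^+3*c*x^+3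 + 4%:R*a^+3*b*c^+2*z^+3 + 4%:R*a^+3*b*c^+2*y^+2*z - 44%:R*a^+3*b*c^+2*x^+2*z + 4%:R*a^+3*b^+2*c*y*z^+2 + 4%:R*a^+3*b^+2*c*y^+3 - 44%:R*a^+3*b^+2*c*x^+2*y + 4%:R*a^+4*b*c*x*z^+2 + 4%:R*a^+4*b*c*x*y^+2 - 12%:R*a^+4*b*c*x^+3 - 4%:R*sigma*c^+5*y^+2*z - 4%:R*sigma*c^+5*x^+2*z - 8%:R*sigma*b*c^+4*y*z^+2 - 4%:R*sigma*b*c^+4*y^+3 - 8%:R*sigma*b*c^+4*x^+2*y + 12%:R*sigma*b^+2*c^+3*z^+3 - 28%:R*sigma*b^+2*c^+3*y^+2*z - 4%:R*sigma*b^+2*c^+3*x^+2*z + 36%:R*sigma*b^+3*c^+2*y*z^+2 - 20%:R*sigma*b^+3*c^+2*y^+3 - 12%:R*sigma*b^+3*c^+2*x^+2*y - 4%:R*sigma*b^+4*c*z^+3 + 24%:R*sigma*b^+4*c*y^+2*z - 4%:R*sigma*b^+5*y*z^+2 - 4%:R*sigma*b^+5*x^+2*y + 24%:R*sigma*a*c^+4*x*z^+2 - 4%:R*sigma*a*c^+4*x^+3 + 24%:R*sigma*a*b*c^+3*x*y*z + 16%:R*sigma*a*b^+2*c^+2*x*z^+2 - 8%:R*sigma*a*b^+2*c^+2*x*y^+2 - 8%:R*sigma*a*b^+2*c^+2*x^+3 + 24%:R*sigma*a*b^+3*c*x*y*z - 8%:R*sigma*a*b^+4*x*z^+2 - 8%:R*sigma*a*b^+4*x*y^+2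 - 4%:R*sigma*a*b^+4*x^+3 - 20%:R*sigma*a^+2*c^+3*z^+3 - 12%:R*sigma*a^+2*c^+3*y^+2*z + 36%:R*sigma*a^+2*c^+3*x^+2*z - 8%:R*sigma*a^+2*b*c^+2*y*z^+2 - 8%:R*sigma*a^+2*b*c^+2*y^+3 + 16%:R*sigma*a^+2*b*c^+2*x^+2*y - 8%:R*sigma*a^+2*b^+2*c*z^+3 + 16%:R*sigma*a^+2*b^+2*c*y^+2*z - 8%:R*sigma*a^+2*b^+2*c*x^+2*z - 4%:R*sigma*a^+2*b^+3*y*z^+2 + 12%:R*sigma*a^+2*b^+3*y^+3 - 28%:R*sigma*a^+2*b^+3*x^+2*y - 28%:R*sigma*a^+3*c^+2*x*z^+2 - 4%:R*sigma*a^+3*c^+2*x*y^+2 + 12%:R*sigma*a^+3*c^+2*x^+3 + 24%:R*sigma*a^+3*b*c*x*y*z - 12%:R*sigma*a^+3*b^+2*x*z^+2 + 36%:R*sigma*a^+3*b^+2*x*y^+2 - 20%:R*sigma*a^+3*b^+2*x^+3 - 4%:R*sigma*a^+4*c*z^+3 - 8%:R*sigma*a^+4*c*y^+2*z - 8%:R*sigma*a^+4*c*x^+2*z - 4%:R*sigma*a^+4*b*y^+3 + 24%:R*sigma*a^+4*b*x^+2*y - 4%:R*sigma*a^+5*x*z^+2 - 4%:R*sigma*a^+5*x*y^+2 + 20%:R*sigma^+2*c^+4*x*y*z - 4%:R*sigma^+2*b*c^+3*x*z^+2 + 12%:R*sigma^+2*b*c^+3*x*y^+2 + 4%:R*sigma^+2*b*c^+3*x^+3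 + 8%:R*sigma^+2*b^+2*c^+2*x*y*z + 12%:R*sigma^+2*b^+3*c*x*z^+2 - 4%:R*sigma^+2*b^+3*c*x*y^+2 + 4%:R*sigma^+2*b^+3*c*x^+3 + 20%:R*sigma^+2*b^+4*x*y*z - 4%:R*sigma^+2*a*c^+3*y*z^+2 + 4%:R*sigma^+2*a*c^+3*y^+3 + 12%:R*sigma^+2*a*c^+3*x^+2*y + 40%:R*sigma^+2*a*b*c^+2*z^+3 + 32%:R*sigma^+2*a*b*c^+2*y^+2*z + 32%:R*sigma^+2*a*b*c^+2*x^+2*z + 32%:R*sigma^+2*a*b^+2*c*y*z^+2 + 40%:R*sigma^+2*a*b^+2*c*y^+3 + 32%:R*sigma^+2*a*b^+2*c*x^+2*y + 4%:R*sigma^+2*a*b^+3*z^+3 - 4%:R*sigma^+2*a*b^+3*y^+2*z + 12%:R*sigma^+2*a*b^+3*x^+2*z + 8%:R*sigma^+2*a^+2*c^+2*x*y*z + 32%:R*sigma^+2*a^+2*b*c*x*z^+2 + 32%:R*sigma^+2*a^+2*b*c*x*y^+2 + 40%:R*sigma^+2*a^+2*b*c*x^+3 + 8%:R*sigma^+2*a^+2*b^+2*x*y*z + 12%:R*sigma^+2*a^+3*c*y*z^+2 + 4%:R*sigma^+2*a^+3*c*y^+3 - 4%:R*sigma^+2*a^+3*c*x^+2*y + 4%:R*sigma^+2*a^+3*b*z^+3 + 12%:R*sigma^+2*a^+3*b*y^+2*z - 4%:R*sigma^+2*a^+3*b*x^+2*z + 20%:R*sigma^+2*a^+4*x*y*z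 + 16%:R*sigma^+3*c^+3*y^+2*z - 24%:R*sigma^+3*c^+3*x^+2*z + 4%:R*sigma^+3*b*c^+2*y*z^+2 + 12%:R*sigma^+3*b*c^+2*y^+3 - 4%:R*sigma^+3*b*c^+2*x^+2*y - 20%:R*sigma^+3*b^+2*c*z^+3 + 12%:R*sigma^+3*b^+2*c*y^+2*z - 4%:R*sigma^+3*b^+2*c*x^+2*z - 24%:R*sigma^+3*b^+3*y*z^+2 + 16%:R*sigma^+3*b^+3*x^+2*y + 12%:R*sigma^+3*a*c^+2*x*z^+2 - 4%:R*sigma^+3*a*c^+2*x*y^+2 - 20%:R*sigma^+3*a*c^+2*x^+3 + 24%:R*sigma^+3*a*b*c*x*y*z - 4%:R*sigma^+3*a*b^+2*x*z^+2 + 4%:R*sigma^+3*a*b^+2*x*y^+2 + 12%:R*sigma^+3*a*b^+2*x^+3 + 12%:R*sigma^+3*a^+2*c*z^+3 - 4%:R*sigma^+3*a^+2*c*y^+2*z + 4%:R*sigma^+3*a^+2*c*x^+2*z - 4%:R*sigma^+3*a^+2*b*y*z^+2 - 20%:R*sigma^+3*a^+2*b*y^+3 + 12%:R*sigma^+3*a^+2*b*x^+2*y + 16%:R*sigma^+3*a^+3*x*z^+2 - 24%:R*sigma^+3*a^+3*x*y^+2 - 32%:R*sigma^+4*c^+2*x*y*z - 4%:R*sigma^+4*b*c*x*z^+2 - 4%:R*sigma^+4*b*c*x*y^+2 - 12%:R*sigma^+4*b*c*x^+3 - 32%:R*sigma^+4*b^+2*x*y*z - 4%:R*sigma^+4*a*c*y*z^+2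 - 12%:R*sigma^+4*a*c*y^+3 - 4%:R*sigma^+4*a*c*x^+2*y - 12%:R*sigma^+4*a*b*z^+3 - 4%:R*sigma^+4*a*b*y^+2*z - 4%:R*sigma^+4*a*b*x^+2*z - 32%:R*sigma^+4*a^+2*x*y*z - 12%:R*sigma^+5*c*y^+2*z + 12%:R*sigma^+5*c*x^+2*z + 12%:R*sigma^+5*b*y*z^+2 - 12%:R*sigma^+5*b*x^+2*y - 12%:R*sigma^+5*a*x*z^+2 + 12%:R*sigma^+5*a*x*y^+2 + 12%:R*sigma^+6*x*y*z) + (a*x+b*y+c*z) * (16%:R*a*b*c^+5*z^+2 + 32%:R*a*b^+2*c^+4*y*z + 16%:R*a*b^+3*c^+3*z^+2 + 16%:R*a*b^+3*c^+3*y^+2 + 32%:R*a*b^+4*c^+2*y*z + 16%:R*a*b^+5*c*y^+2 + 32%:R*a^+2*b*c^+4*x*z + 32%:R*a^+2*b^+2*c^+3*x*y + 32%:R*a^+2*b^+3*c^+2*x*z + 32%:R*a^+2*b^+4*c*x*y + 16%:R*a^+3*b*c^+3*z^+2 + 16%:R*a^+3*b*c^+3*x^+2 + 32%:R*a^+3*b^+2*c^+2*y*z + 16%:R*a^+3*b^+3*c*y^+2 + 16%:R*a^+3*b^+3*c*x^+2 + 32%:R*a^+4*b*c^+2*x*z + 32%:R*a^+4*b^+2*c*x*y + 16%:R*a^+5*b*c*x^+2 + 16%:R*sigma*b*c^+5*y*z - 16%:R*sigma*b^+2*c^+4*z^+2 + 16%:R*sigma*b^+2*c^+4*y^+2 -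 16%:R*sigma*b^+4*c^+2*z^+2 + 16%:R*sigma*b^+4*c^+2*y^+2 - 16%:R*sigma*b^+5*c*y*z - 16%:R*sigma*a*c^+5*x*z - 16%:R*sigma*a*b^+2*c^+3*x*z + 16%:R*sigma*a*b^+3*c^+2*x*y + 16%:R*sigma*a*b^+5*x*y + 16%:R*sigma*a^+2*c^+4*z^+2 - 16%:R*sigma*a^+2*c^+4*x^+2 + 16%:R*sigma*a^+2*b*c^+3*y*z - 16%:R*sigma*a^+2*b^+3*c*y*z - 16%:R*sigma*a^+2*b^+4*y^+2 + 16%:R*sigma*a^+2*b^+4*x^+2 - 16%:R*sigma*a^+3*b*c^+2*x*y + 16%:R*sigma*a^+3*b^+2*c*x*z + 16%:R*sigma*a^+4*c^+2*z^+2 - 16%:R*sigma*a^+4*c^+2*x^+2 - 16%:R*sigma*a^+4*b^+2*y^+2 + 16%:R*sigma*a^+4*b^+2*x^+2 + 16%:R*sigma*a^+5*c*x*z - 16%:R*sigma*a^+5*b*x*y - 16%:R*sigma^+2*c^+5*x*y - 16%:R*sigma^+2*b^+2*c^+3*x*y - 16%:R*sigma^+2*b^+3*c^+2*x*z - 16%:R*sigma^+2*b^+5*x*z - 32%:R*sigma^+2*a*b*c^+3*z^+2 - 48%:R*sigma^+2*a*b*c^+3*y^+2 - 48%:R*sigma^+2*a*b*c^+3*x^+2 + 32%:R*sigma^+2*a*b^+2*c^+2*y*z - 48%:R*sigma^+2*a*b^+3*c*z^+2 - 32%:R*sigma^+2*a*b^+3*c*y^+2 - 48%:R*sigma^+2*a*b^+3*c*x^+2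 - 16%:R*sigma^+2*a^+2*c^+3*x*y + 32%:R*sigma^+2*a^+2*b*c^+2*x*z + 32%:R*sigma^+2*a^+2*b^+2*c*x*y - 16%:R*sigma^+2*a^+2*b^+3*x*z - 16%:R*sigma^+2*a^+3*c^+2*y*z - 48%:R*sigma^+2*a^+3*b*c*z^+2 - 48%:R*sigma^+2*a^+3*b*c*y^+2 - 32%:R*sigma^+2*a^+3*b*c*x^+2 - 16%:R*sigma^+2*a^+3*b^+2*y*z - 16%:R*sigma^+2*a^+5*y*z + 32%:R*sigma^+3*c^+4*x^+2 - 16%:R*sigma^+3*b*c^+3*y*z + 16%:R*sigma^+3*b^+2*c^+2*z^+2 + 16%:R*sigma^+3*b^+2*c^+2*y^+2 + 32%:R*sigma^+3*b^+2*c^+2*x^+2 - 48%:R*sigma^+3*b^+3*c*y*z + 32%:R*sigma^+3*b^+4*z^+2 - 48%:R*sigma^+3*a*c^+3*x*z - 32%:R*sigma^+3*a*b*c^+2*x*y - 32%:R*sigma^+3*a*b^+2*c*x*z - 16%:R*sigma^+3*a*b^+3*x*y + 16%:R*sigma^+3*a^+2*c^+2*z^+2 + 32%:R*sigma^+3*a^+2*c^+2*y^+2 + 16%:R*sigma^+3*a^+2*c^+2*x^+2 - 32%:R*sigma^+3*a^+2*b*c*y*z + 32%:R*sigma^+3*a^+2*b^+2*z^+2 + 16%:R*sigma^+3*a^+2*b^+2*y^+2 + 16%:R*sigma^+3*a^+2*b^+2*x^+2 - 16%:R*sigma^+3*a^+3*c*x*z - 48%:R*sigma^+3*a^+3*b*x*y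 + 32%:R*sigma^+3*a^+4*y^+2 + 16%:R*sigma^+4*b*c^+2*x*z + 16%:R*sigma^+4*b^+2*c*x*y + 16%:R*sigma^+4*a*c^+2*y*z - 48%:R*sigma^+4*a*b*c*z^+2 - 48%:R*sigma^+4*a*b*c*y^+2 - 48%:R*sigma^+4*a*b*c*x^+2 + 16%:R*sigma^+4*a*b^+2*y*z + 16%:R*sigma^+4*a^+2*c*x*y + 16%:R*sigma^+4*a^+2*b*x*z + 32%:R*sigma^+5*c^+2*x^+2 - 32%:R*sigma^+5*b*c*y*z + 32%:R*sigma^+5*b^+2*z^+2 - 32%:R*sigma^+5*a*c*x*z - 32%:R*sigma^+5*a*b*x*y + 32%:R*sigma^+5*a^+2*y^+2 + 16%:R*sigma^+6*c*x*y + 16%:R*sigma^+6*b*x*z + 16%:R*sigma^+6*a*y*z).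
Proof. by move=> -> -> -> -> -> -> -> -> -> ->; ring. Qed.

Theorem mainTheorem5 (R : realFieldType) (sigma : R) (u t : 'cV[R]_3)
  (hunit : sigma ^+ 2 + dotv u u = 1)
  (hperp : dotv u t = 0) :
  let Rot := quat_rot sigma u in
  let E := crossmx t *m Rot in
  let A := E - E^T in
  let tau' := mxtrace Rot + 1 in
  (forall i j k : 'I_3, i != j -> j != k -> i != k ->
     (A k i * E i i * E j k + A i j * E k k * E i i
      - A j k * (E k k * E i k - E k i * E j j + E k j * E j i + E i j * E j k))
       * tau' + 2%:R * A i j * A j k ^+ 2 = 0)
  /\
  (A i0 i1 * A i1 i2 * E i2 i0 + A i0 i1 * A i2 i0 * E i2 i1
   + A i0 i1 * E i0 i1 * E i2 i2 + A i1 i2 * A i2 i0 * E i1 i0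
   + A i1 i2 * E i0 i0 * E i1 i2 + A i2 i0 * E i1 i1 * E i2 i0)
    * tau' + 2%:R * A i0 i1 * A i1 i2 * A i2 i0 = 0.
Proof.
move=> Rot E A tau'.
have hu := hunit; have hp := hperp; rewrite !dotE in hu hp.
rewrite /tau' /A /E /Rot.
split.
  move=> i j k; case: (ord3 i)=>[->|[->|->]]; case: (ord3 j)=>[->|[->|->]]; case: (ord3 k)=>[->|[->|->]] // _ _ _.
  1: by rewrite !AE (poly0 _ _ _ _ _ _ _ _ _ _ _ _ _ _ _ _ _ _ (ent00 _ sigma u t) (ent01 _ sigma u t) (ent02 _ sigma u t) (ent10 _ sigma u t) (ent11 _ sigma u t) (ent12 _ sigma u t) (ent20 _ sigma u t) (ent21 _ sigma u t) (ent22 _ sigma u t) (entT _ sigma u)) hu hp subrr !mul0r addr0.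
  1: by rewrite !AE (poly1 _ _ _ _ _ _ _ _ _ _ _ _ _ _ _ _ _ _ (ent00 _ sigma u t) (ent01 _ sigma u t) (ent02 _ sigma u t) (ent10 _ sigma u t) (ent11 _ sigma u t) (ent12 _ sigma u t) (ent20 _ sigma u t) (ent21 _ sigma u t) (ent22 _ sigma u t) (entT _ sigma u)) hu hp subrr !mul0r addr0.
  1: by rewrite !AE (poly2 _ _ _ _ _ _ _ _ _ _ _ _ _ _ _ _ _ _ (ent00 _ sigma u t) (ent01 _ sigma u t) (ent02 _ sigma u t) (ent10 _ sigma u t) (ent11 _ sigma u t) (ent12 _ sigma u t) (ent20 _ sigma u t) (ent21 _ sigma u t) (ent22 _ sigma u t) (entT _ sigma u)) hu hp subrr !mul0r addr0.
  1: by rewrite !AE (poly3 _ _ _ _ _ _ _ _ _ _ _ _ _ _ _ _ _ _ (ent00 _ sigma u t) (ent01 _ sigma u t) (ent02 _ sigma u t) (ent10 _ sigma u t) (ent11 _ sigma u t) (ent12 _ sigma u t) (ent20 _ sigma u t) (ent21 _ sigma u t) (ent22 _ sigma u t) (entT _ sigma u)) hu hp subrr !mul0r addr0.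
  1: by rewrite !AE (poly4 _ _ _ _ _ _ _ _ _ _ _ _ _ _ _ _ _ _ (ent00 _ sigma u t) (ent01 _ sigma u t) (ent02 _ sigma u t) (ent10 _ sigma u t) (ent11 _ sigma u t) (ent12 _ sigma u t) (ent20 _ sigma u t) (ent21 _ sigma u t) (ent22 _ sigma u t) (entT _ sigma u)) hu hp subrr !mul0r addr0.
  1: by rewrite !AE (poly5 _ _ _ _ _ _ _ _ _ _ _ _ _ _ _ _ _ _ (ent00 _ sigma u t) (ent01 _ sigma u t) (ent02 _ sigma u t) (ent10 _ sigma u t) (ent11 _ sigma u t) (ent12 _ sigma u t) (ent20 _ sigma u t) (ent21 _ sigma u t) (ent22 _ sigma u t) (entT _ sigma u)) hu hp subrr !mul0r addr0.
by rewrite !AE (poly6 _ _ _ _ _ _ _ _ _ _ _ _ _ _ _ _ _ _ (ent00 _ sigma u t) (ent01 _ sigma u t) (ent02 _ sigma u t) (ent10 _ sigma u t) (ent11 _ sigma u t) (ent12 _ sigma u t) (ent20 _ sigma u t) (ent21 _ sigma u t) (ent22 _ sigma u t) (entT _ sigma u)) hu hp subrr !mul0r addr0.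
Qed.
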